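(* Let $a$ be a complex number of modulus one and let $H$ be a $6\times 6$ complex Hadamard matrix all of whose entries lie in $\{1,a,-a\}$. Then $H$ is complex equivalent to $$H^{(1)}=\begin{bmatrix} i&1&1&1&1&1\\ 1&i&1&1&-1&-1\\ 1&1&i&-1&1&-1\\ 1&1&-1&i&-1&1\\ 1&-1&1&-1&i&1\\ 1&-1&-1&1&1&i \end{bmatrix}.$$
   Context: A complex Hadamard matrix (CHM) of order $n$ is an $n\times n$ complex matrix $H$ all of whose entries have modulus one and which satisfies $HH^\dagger=nI$. A monomial unitary matrix is a unitary matrix each of whose rows and columns has exactly one nonzero entry, that entry having modulus one. Two $n\times n$ matrices $U,V$ are complex equivalent if $U=PVQ$ for some $n\times n$ monomial unitary matrices $P,Q$. *)

(* Defs.v *)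
From HB Require Import structures.
From mathcomp Require Import all_boot all_order all_algebra.
From mathcomp Require Import complex.
From mathcomp Require Import reals.
Set Implicit Arguments. Unset Strict Implicit. Unset Printing Implicit Defensive.
Import Order.TTheory GRing.Theory Num.Theory.
Local Open Scope ring_scope.

Definition ctrmx {C : numClosedFieldType} {m n : nat} (A : 'M[C]_(m, n)) : 'M[C]_(n, m) :=
  map_mx Num.conj A^T.

Definition unitary_mx {C : numClosedFieldType} {n : nat} (U : 'M[C]_n) : Prop :=
  U *m ctrmx U = 1%:M.

Definition is_CHM {C : numClosedFieldType} {n : nat} (H : 'M[C]_n) : Prop :=
  (forall i j, `|H i j| = 1) /\ H *m ctrmx H = n%:R%:M.

Definition monomial_unitary {C : numClosedFieldType} {n : nat} (P : 'M[C]_n) : Prop :=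
  unitary_mx P /\
  (forall i : 'I_n, #|[set j | P i j != 0]| = 1%N) /\
  (forall j : 'I_n, #|[set i | P i j != 0]| = 1%N) /\
  (forall i j, P i j != 0 -> `|P i j| = 1).

Definition complex_equivalent {C : numClosedFieldType} {n : nat} (U V : 'M[C]_n) : Prop :=
  exists P Q : 'M[C]_n, monomial_unitary P /\ monomial_unitary Q /\ U = P *m V *m Q.

Definition H1 {C : numClosedFieldType} : 'M[C]_6 :=
  \matrix_(i < 6, j < 6)
    nth 0 (nth [::] [:: [:: 'i; 1; 1; 1; 1; 1];
                      [:: 1; 'i; 1; 1; -1; -1];
                      [:: 1; 1; 'i; -1; 1; -1];
                      [:: 1; 1; -1; 'i; -1; 1];
                      [:: 1; -1; 1; -1; 'i; 1];
                      [:: 1; -1; -1; 1; 1; 'i]] i) j.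

(* Main.v *)
Require Import Defs.
From HB Require Import structures.
From mathcomp Require Import all_boot all_order all_algebra fingroup perm ring.
From mathcomp Require Import complex reals.
Set Implicit Arguments. Unset Strict Implicit. Unset Printing Implicit Defensive.
Import Order.TTheory GRing.Theory Num.Theory.

Section Search.
Variable X : eqType.
Variable m : X -> X -> bool.
Fixpoint srch (k : nat) (cl : seq X) (cands : seq X) {struct k} : seq (seq X) :=
  match k with 0 => [:: cl] | k'.+1 =>
    (fix go (cands : seq X) := match cands with [::] => [::]
       | r :: rest => srch k' (r :: cl) (filter (m r) rest) ++ go rest end) cands end.

Lemma srch_complete k cl cands s : subseq s cands -> size s = k -> pairwise m s ->
  rev s ++ cl \in srch k cl cands.
Proof.
elim: k cl cands s => [|k IHk] cl cands s.
  by case: s => // _ _ _; rewrite mem_seq1.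
elim: cands s => [|r rest IHc] s /=.
  by move/eqP=> ->.
case: s => [|x s'] //.
have [<-|xr] := eqP; rewrite ?mem_cat.
  move=> Hsub [Hs] /= /andP[Hall Hpw].
  have := IHk (x :: cl) (filter (m x) rest) s'.
  rewrite subseq_filter Hall Hsub Hs Hpw => /(_ isT erefl isT).
  by rewrite rev_cons cat_rcons => ->.
move=> Hsub Hs Hpw; apply/orP; right.
exact: IHc.
Qed.

Lemma pairwise_of_rel (s : seq X) : uniq s ->
  {in s &, forall x y, x != y -> m x y} -> pairwise m s.
Proof.
elim: s => //= x s IH /andP[xs us] H.
apply/andP; split; last first.
  by apply: IH => // u v us' vs'; apply: H; rewrite inE ?us' ?vs' orbT.
apply/allP=> y ys; apply: H; rewrite ?inE ?eqxx ?ys ?orbT //.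
by apply: contraNneq xs => ->.
Qed.

Lemma pick_sub (al rl : seq X) : uniq al -> uniq rl -> {subset rl <= al} ->
  {in rl &, forall x y, x != y -> m x y} ->
  let S := filter (mem rl) al in
  [/\ subseq S al, size S = size rl, pairwise m S & S =i rl].
Proof.
move=> ua url sb H S.
have SE : S =i rl.
  move=> x; rewrite mem_filter /=; case: (boolP (x \in rl)) => //= xr.
  exact: sb.
have uS : uniq S by exact: filter_uniq.
split => //; first exact: filter_subseq.
  by apply: perm_size; apply: uniq_perm.
apply: pairwise_of_rel => // x y; rewrite !SE; exact: H.
Qed.
End Search.

Section Rows.
Variable X : eqType.
Fixpoint rowsg (vals : seq X) (n : nat) : seq (seq X) :=
  if n is n'.+1 then [seq c :: r | c <- vals, r <- rowsg vals n'] else [:: [::]].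
Lemma mem_rowsg vals n r : size r = n -> all (mem vals) r -> r \in rowsg vals n.
Proof.
elim: n r => [|n IH] [|c r] //= [Hs] /andP[cv ra].
apply/allpairsP; exists (c, r) => /=; split => //; exact: IH.
Qed.

Fixpoint sum2 (f : X -> X -> int) (r s : seq X) : int :=
  match r, s with x :: r', y :: s' => f x y + sum2 f r' s' | _, _ => 0 end.
End Rows.

Lemma all2_ex (A B : eqType) (P : A -> B -> bool) s t x :
  all2 P s t -> x \in s -> exists y, P x y.
Proof.
elim: s t => [|a s IH] [|b t] //= /andP[Pab H]; rewrite inE => /orP[/eqP->|xs].
  by exists b.
exact: IH H xs.
Qed.

Definition ncode (c : nat) : nat := if c is 0 then 0 else if c is 1 then 1 else 2.
Definition h1tab : seq (seq nat) :=
  [:: [:: 1;0;0;0;0;0]; [:: 0;1;0;0;2;2]; [:: 0;0;1;2;0;2];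
      [:: 0;0;2;1;2;0]; [:: 0;2;0;2;1;0]; [:: 0;2;2;0;0;1]].
Definition h1e (i j : nat) : nat := nth 0 (nth [::] h1tab i) j.
Definition ce (c : nat) : nat := if c is 0 then 0 else if c is 1 then 1 else 3.

Definition wits : seq (seq nat) := [::
  [:: 4; 3; 2; 1; 0; 5; 0; 1; 2; 3; 4; 5; 0; 0; 2; 2; 0; 1; 3; 1; 1; 3; 3; 3];
  [:: 4; 3; 2; 1; 0; 5; 0; 1; 2; 4; 3; 5; 0; 0; 2; 2; 0; 1; 3; 1; 1; 3; 3; 3];
  [:: 5; 2; 3; 1; 0; 4; 0; 1; 2; 3; 5; 4; 0; 0; 2; 2; 0; 1; 3; 1; 3; 1; 3; 3];
  [:: 4; 3; 2; 1; 0; 5; 0; 1; 4; 2; 3; 5; 0; 0; 2; 2; 0; 1; 3; 1; 3; 1; 3; 3];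
  [:: 5; 2; 3; 1; 0; 4; 0; 1; 2; 5; 3; 4; 0; 0; 2; 2; 0; 1; 3; 1; 3; 3; 1; 3];
  [:: 4; 3; 2; 1; 0; 5; 0; 1; 4; 3; 2; 5; 0; 0; 2; 2; 0; 1; 3; 1; 3; 3; 1; 3];
  [:: 5; 1; 4; 2; 0; 3; 0; 1; 2; 4; 5; 3; 0; 0; 2; 2; 0; 1; 3; 3; 1; 1; 3; 3];
  [:: 5; 1; 4; 2; 0; 3; 0; 1; 4; 2; 5; 3; 0; 0; 2; 2; 0; 1; 3; 3; 1; 1; 3; 3];
  [:: 5; 1; 4; 2; 0; 3; 0; 1; 2; 5; 4; 3; 0; 0; 2; 2; 0; 1; 3; 3; 1; 3; 1; 3];
  [:: 5; 1; 4; 2; 0; 3; 0; 1; 4; 5; 2; 3; 0; 0; 2; 2; 0; 1; 3; 3; 1; 3; 1; 3];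
  [:: 4; 1; 5; 3; 0; 2; 0; 1; 4; 3; 5; 2; 0; 0; 2; 2; 0; 1; 3; 3; 3; 1; 1; 3];
  [:: 4; 1; 5; 3; 0; 2; 0; 1; 4; 5; 3; 2; 0; 0; 2; 2; 0; 1; 3; 3; 3; 1; 1; 3];
  [:: 4; 3; 2; 1; 0; 5; 0; 1; 2; 3; 4; 5; 0; 0; 2; 2; 0; 1; 3; 1; 1; 3; 3; 1];
  [:: 4; 3; 2; 1; 0; 5; 0; 1; 2; 4; 3; 5; 0; 0; 2; 2; 0; 1; 3; 1; 1; 3; 3; 1];
  [:: 5; 2; 3; 1; 0; 4; 0; 1; 2; 3; 5; 4; 0; 0; 2; 2; 0; 1; 3; 1; 3; 1; 3; 1];
  [:: 4; 3; 2; 1; 0; 5; 0; 1; 4; 2; 3; 5; 0; 0; 2; 2; 0; 1; 3; 1; 3; 1; 3; 1];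
  [:: 5; 2; 3; 1; 0; 4; 0; 1; 2; 5; 3; 4; 0; 0; 2; 2; 0; 1; 3; 1; 3; 3; 1; 1];
  [:: 4; 3; 2; 1; 0; 5; 0; 1; 4; 3; 2; 5; 0; 0; 2; 2; 0; 1; 3; 1; 3; 3; 1; 1];
  [:: 5; 1; 4; 2; 0; 3; 0; 1; 2; 4; 5; 3; 0; 0; 2; 2; 0; 1; 3; 3; 1; 1; 3; 1];
  [:: 5; 1; 4; 2; 0; 3; 0; 1; 4; 2; 5; 3; 0; 0; 2; 2; 0; 1; 3; 3; 1; 1; 3; 1];
  [:: 5; 1; 4; 2; 0; 3; 0; 1; 2; 5; 4; 3; 0; 0; 2; 2; 0; 1; 3; 3; 1; 3; 1; 1];
  [:: 5; 1; 4; 2; 0; 3; 0; 1; 4; 5; 2; 3; 0; 0; 2; 2; 0; 1; 3; 3; 1; 3; 1; 1];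
  [:: 4; 1; 5; 3; 0; 2; 0; 1; 4; 3; 5; 2; 0; 0; 2; 2; 0; 1; 3; 3; 3; 1; 1; 1];
  [:: 4; 1; 5; 3; 0; 2; 0; 1; 4; 5; 3; 2; 0; 0; 2; 2; 0; 1; 3; 3; 3; 1; 1; 1];
  [:: 4; 3; 2; 1; 0; 5; 0; 1; 2; 3; 5; 4; 0; 0; 2; 2; 0; 1; 3; 1; 1; 3; 3; 3];
  [:: 4; 3; 2; 1; 0; 5; 0; 1; 2; 4; 5; 3; 0; 0; 2; 2; 0; 1; 3; 1; 1; 3; 3; 3];
  [:: 5; 2; 3; 1; 0; 4; 0; 1; 2; 3; 4; 5; 0; 0; 2; 2; 0; 1; 3; 1; 3; 1; 3; 3];
  [:: 4; 3; 2; 1; 0; 5; 0; 1; 4; 2; 5; 3; 0; 0; 2; 2; 0; 1; 3; 1; 3; 1; 3; 3];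
  [:: 5; 2; 3; 1; 0; 4; 0; 1; 2; 5; 4; 3; 0; 0; 2; 2; 0; 1; 3; 1; 3; 3; 3; 1];
  [:: 4; 3; 2; 1; 0; 5; 0; 1; 4; 3; 5; 2; 0; 0; 2; 2; 0; 1; 3; 1; 3; 3; 3; 1];
  [:: 5; 1; 4; 2; 0; 3; 0; 1; 2; 4; 3; 5; 0; 0; 2; 2; 0; 1; 3; 3; 1; 1; 3; 3];
  [:: 5; 1; 4; 2; 0; 3; 0; 1; 4; 2; 3; 5; 0; 0; 2; 2; 0; 1; 3; 3; 1; 1; 3; 3];
  [:: 5; 1; 4; 2; 0; 3; 0; 1; 2; 5; 3; 4; 0; 0; 2; 2; 0; 1; 3; 3; 1; 3; 3; 1];
  [:: 5; 1; 4; 2; 0; 3; 0; 1; 4; 5; 3; 2; 0; 0; 2; 2; 0; 1; 3; 3; 1; 3; 3; 1];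
  [:: 4; 1; 5; 3; 0; 2; 0; 1; 4; 3; 2; 5; 0; 0; 2; 2; 0; 1; 3; 3; 3; 1; 3; 1];
  [:: 4; 1; 5; 3; 0; 2; 0; 1; 4; 5; 2; 3; 0; 0; 2; 2; 0; 1; 3; 3; 3; 1; 3; 1];
  [:: 4; 3; 2; 1; 0; 5; 0; 1; 2; 3; 5; 4; 0; 0; 2; 2; 0; 1; 3; 1; 1; 3; 1; 3];
  [:: 4; 3; 2; 1; 0; 5; 0; 1; 2; 4; 5; 3; 0; 0; 2; 2; 0; 1; 3; 1; 1; 3; 1; 3];
  [:: 5; 2; 3; 1; 0; 4; 0; 1; 2; 3; 4; 5; 0; 0; 2; 2; 0; 1; 3; 1; 3; 1; 1; 3];
  [:: 4; 3; 2; 1; 0; 5; 0; 1; 4; 2; 5; 3; 0; 0; 2; 2; 0; 1; 3; 1; 3; 1; 1; 3];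
  [:: 5; 2; 3; 1; 0; 4; 0; 1; 2; 5; 4; 3; 0; 0; 2; 2; 0; 1; 3; 1; 3; 3; 1; 1];
  [:: 4; 3; 2; 1; 0; 5; 0; 1; 4; 3; 5; 2; 0; 0; 2; 2; 0; 1; 3; 1; 3; 3; 1; 1];
  [:: 5; 1; 4; 2; 0; 3; 0; 1; 2; 4; 3; 5; 0; 0; 2; 2; 0; 1; 3; 3; 1; 1; 1; 3];
  [:: 5; 1; 4; 2; 0; 3; 0; 1; 4; 2; 3; 5; 0; 0; 2; 2; 0; 1; 3; 3; 1; 1; 1; 3];
  [:: 5; 1; 4; 2; 0; 3; 0; 1; 2; 5; 3; 4; 0; 0; 2; 2; 0; 1; 3; 3; 1; 3; 1; 1];
  [:: 5; 1; 4; 2; 0; 3; 0; 1; 4; 5; 3; 2; 0; 0; 2; 2; 0; 1; 3; 3; 1; 3; 1; 1];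
  [:: 4; 1; 5; 3; 0; 2; 0; 1; 4; 3; 2; 5; 0; 0; 2; 2; 0; 1; 3; 3; 3; 1; 1; 1];
  [:: 4; 1; 5; 3; 0; 2; 0; 1; 4; 5; 2; 3; 0; 0; 2; 2; 0; 1; 3; 3; 3; 1; 1; 1];
  [:: 4; 3; 2; 1; 0; 5; 0; 1; 2; 5; 3; 4; 0; 0; 2; 2; 0; 1; 3; 1; 1; 3; 3; 3];
  [:: 4; 3; 2; 1; 0; 5; 0; 1; 2; 5; 4; 3; 0; 0; 2; 2; 0; 1; 3; 1; 1; 3; 3; 3];
  [:: 5; 2; 3; 1; 0; 4; 0; 1; 2; 4; 3; 5; 0; 0; 2; 2; 0; 1; 3; 1; 3; 3; 1; 3];
  [:: 4; 3; 2; 1; 0; 5; 0; 1; 4; 5; 2; 3; 0; 0; 2; 2; 0; 1; 3; 1; 3; 3; 1; 3];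
  [:: 5; 2; 3; 1; 0; 4; 0; 1; 2; 4; 5; 3; 0; 0; 2; 2; 0; 1; 3; 1; 3; 3; 3; 1];
  [:: 4; 3; 2; 1; 0; 5; 0; 1; 4; 5; 3; 2; 0; 0; 2; 2; 0; 1; 3; 1; 3; 3; 3; 1];
  [:: 5; 1; 4; 2; 0; 3; 0; 1; 2; 3; 4; 5; 0; 0; 2; 2; 0; 1; 3; 3; 1; 3; 1; 3];
  [:: 5; 1; 4; 2; 0; 3; 0; 1; 4; 3; 2; 5; 0; 0; 2; 2; 0; 1; 3; 3; 1; 3; 1; 3];
  [:: 5; 1; 4; 2; 0; 3; 0; 1; 2; 3; 5; 4; 0; 0; 2; 2; 0; 1; 3; 3; 1; 3; 3; 1];
  [:: 5; 1; 4; 2; 0; 3; 0; 1; 4; 3; 5; 2; 0; 0; 2; 2; 0; 1; 3; 3; 1; 3; 3; 1];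
  [:: 4; 1; 5; 3; 0; 2; 0; 1; 4; 2; 3; 5; 0; 0; 2; 2; 0; 1; 3; 3; 3; 3; 1; 1];
  [:: 4; 1; 5; 3; 0; 2; 0; 1; 4; 2; 5; 3; 0; 0; 2; 2; 0; 1; 3; 3; 3; 3; 1; 1];
  [:: 4; 3; 2; 1; 0; 5; 0; 1; 2; 5; 3; 4; 0; 0; 2; 2; 0; 1; 3; 1; 1; 1; 3; 3];
  [:: 4; 3; 2; 1; 0; 5; 0; 1; 2; 5; 4; 3; 0; 0; 2; 2; 0; 1; 3; 1; 1; 1; 3; 3];
  [:: 5; 2; 3; 1; 0; 4; 0; 1; 2; 4; 3; 5; 0; 0; 2; 2; 0; 1; 3; 1; 3; 1; 1; 3];
  [:: 4; 3; 2; 1; 0; 5; 0; 1; 4; 5; 2; 3; 0; 0; 2; 2; 0; 1; 3; 1; 3; 1; 1; 3];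
  [:: 5; 2; 3; 1; 0; 4; 0; 1; 2; 4; 5; 3; 0; 0; 2; 2; 0; 1; 3; 1; 3; 1; 3; 1];
  [:: 4; 3; 2; 1; 0; 5; 0; 1; 4; 5; 3; 2; 0; 0; 2; 2; 0; 1; 3; 1; 3; 1; 3; 1];
  [:: 5; 1; 4; 2; 0; 3; 0; 1; 2; 3; 4; 5; 0; 0; 2; 2; 0; 1; 3; 3; 1; 1; 1; 3];
  [:: 5; 1; 4; 2; 0; 3; 0; 1; 4; 3; 2; 5; 0; 0; 2; 2; 0; 1; 3; 3; 1; 1; 1; 3];
  [:: 5; 1; 4; 2; 0; 3; 0; 1; 2; 3; 5; 4; 0; 0; 2; 2; 0; 1; 3; 3; 1; 1; 3; 1];
  [:: 5; 1; 4; 2; 0; 3; 0; 1; 4; 3; 5; 2; 0; 0; 2; 2; 0; 1; 3; 3; 1; 1; 3; 1];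
  [:: 4; 1; 5; 3; 0; 2; 0; 1; 4; 2; 3; 5; 0; 0; 2; 2; 0; 1; 3; 3; 3; 1; 1; 1];
  [:: 4; 1; 5; 3; 0; 2; 0; 1; 4; 2; 5; 3; 0; 0; 2; 2; 0; 1; 3; 3; 3; 1; 1; 1];
  [:: 5; 2; 3; 1; 0; 4; 0; 1; 4; 3; 2; 5; 0; 0; 2; 2; 0; 1; 3; 1; 3; 1; 3; 3];
  [:: 5; 2; 3; 1; 0; 4; 0; 1; 4; 3; 5; 2; 0; 0; 2; 2; 0; 1; 3; 1; 3; 1; 3; 3];
  [:: 5; 2; 3; 1; 0; 4; 0; 1; 4; 2; 3; 5; 0; 0; 2; 2; 0; 1; 3; 1; 3; 3; 1; 3];
  [:: 5; 2; 3; 1; 0; 4; 0; 1; 4; 5; 3; 2; 0; 0; 2; 2; 0; 1; 3; 1; 3; 3; 1; 3];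
  [:: 5; 2; 3; 1; 0; 4; 0; 1; 4; 2; 5; 3; 0; 0; 2; 2; 0; 1; 3; 1; 3; 3; 3; 1];
  [:: 5; 2; 3; 1; 0; 4; 0; 1; 4; 5; 2; 3; 0; 0; 2; 2; 0; 1; 3; 1; 3; 3; 3; 1];
  [:: 4; 1; 5; 3; 0; 2; 0; 1; 2; 3; 5; 4; 0; 0; 2; 2; 0; 1; 3; 3; 3; 1; 1; 3];
  [:: 4; 1; 5; 3; 0; 2; 0; 1; 2; 5; 3; 4; 0; 0; 2; 2; 0; 1; 3; 3; 3; 1; 1; 3];
  [:: 4; 1; 5; 3; 0; 2; 0; 1; 2; 3; 4; 5; 0; 0; 2; 2; 0; 1; 3; 3; 3; 1; 3; 1];
  [:: 4; 1; 5; 3; 0; 2; 0; 1; 2; 5; 4; 3; 0; 0; 2; 2; 0; 1; 3; 3; 3; 1; 3; 1];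
  [:: 4; 1; 5; 3; 0; 2; 0; 1; 2; 4; 3; 5; 0; 0; 2; 2; 0; 1; 3; 3; 3; 3; 1; 1];
  [:: 4; 1; 5; 3; 0; 2; 0; 1; 2; 4; 5; 3; 0; 0; 2; 2; 0; 1; 3; 3; 3; 3; 1; 1];
  [:: 5; 4; 3; 0; 1; 2; 0; 1; 2; 5; 4; 3; 0; 2; 2; 1; 1; 1; 3; 3; 3; 2; 0; 0];
  [:: 5; 4; 3; 0; 1; 2; 0; 1; 2; 4; 5; 3; 0; 2; 2; 1; 1; 1; 3; 3; 3; 0; 2; 0];
  [:: 4; 5; 2; 0; 1; 3; 0; 1; 4; 3; 5; 2; 0; 2; 2; 1; 1; 1; 3; 3; 2; 3; 0; 0];
  [:: 4; 5; 2; 0; 1; 3; 0; 1; 4; 5; 3; 2; 0; 2; 2; 1; 1; 1; 3; 3; 2; 0; 3; 0];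
  [:: 5; 4; 3; 0; 1; 2; 0; 1; 4; 2; 5; 3; 0; 2; 2; 1; 1; 1; 3; 3; 0; 3; 2; 0];
  [:: 5; 4; 3; 0; 1; 2; 0; 1; 4; 5; 2; 3; 0; 2; 2; 1; 1; 1; 3; 3; 0; 2; 3; 0];
  [:: 5; 4; 3; 0; 1; 2; 0; 1; 2; 5; 3; 4; 0; 2; 2; 1; 1; 1; 3; 3; 3; 2; 0; 0];
  [:: 5; 4; 3; 0; 1; 2; 0; 1; 2; 4; 3; 5; 0; 2; 2; 1; 1; 1; 3; 3; 3; 0; 0; 2];
  [:: 4; 5; 2; 0; 1; 3; 0; 1; 4; 3; 2; 5; 0; 2; 2; 1; 1; 1; 3; 3; 2; 3; 0; 0];
  [:: 4; 5; 2; 0; 1; 3; 0; 1; 4; 5; 2; 3; 0; 2; 2; 1; 1; 1; 3; 3; 2; 0; 0; 3];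
  [:: 5; 4; 3; 0; 1; 2; 0; 1; 4; 2; 3; 5; 0; 2; 2; 1; 1; 1; 3; 3; 0; 3; 0; 2];
  [:: 5; 4; 3; 0; 1; 2; 0; 1; 4; 5; 3; 2; 0; 2; 2; 1; 1; 1; 3; 3; 0; 2; 0; 3];
  [:: 0; 2; 3; 5; 4; 1; 0; 1; 4; 5; 3; 2; 0; 0; 0; 0; 0; 0; 0; 3; 3; 3; 3; 3];
  [:: 0; 2; 3; 5; 4; 1; 0; 1; 4; 5; 3; 2; 0; 2; 2; 2; 2; 2; 2; 1; 1; 1; 1; 1];
  [:: 3; 4; 5; 0; 1; 2; 0; 1; 2; 3; 4; 5; 0; 0; 2; 1; 1; 1; 3; 3; 3; 2; 2; 0];
  [:: 0; 2; 3; 5; 4; 1; 0; 1; 4; 5; 2; 3; 0; 0; 0; 0; 0; 0; 0; 3; 3; 3; 3; 3];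
  [:: 0; 2; 3; 5; 4; 1; 0; 1; 4; 5; 2; 3; 0; 2; 2; 2; 2; 2; 2; 1; 1; 1; 1; 1];
  [:: 3; 4; 5; 0; 1; 2; 0; 1; 2; 3; 5; 4; 0; 0; 2; 1; 1; 1; 3; 3; 3; 2; 0; 2];
  [:: 2; 5; 4; 0; 1; 3; 0; 1; 2; 3; 5; 4; 0; 0; 2; 1; 1; 1; 3; 3; 2; 3; 2; 0];
  [:: 2; 5; 4; 0; 1; 3; 0; 1; 2; 3; 4; 5; 0; 0; 2; 1; 1; 1; 3; 3; 2; 3; 0; 2];
  [:: 2; 0; 3; 5; 1; 4; 0; 1; 2; 3; 4; 5; 0; 3; 2; 2; 1; 1; 3; 1; 0; 2; 1; 2];
  [:: 2; 0; 3; 5; 1; 4; 0; 1; 2; 3; 5; 4; 0; 3; 2; 2; 1; 1; 3; 1; 0; 2; 2; 1];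
  [:: 3; 0; 2; 4; 1; 5; 0; 1; 2; 3; 5; 4; 0; 3; 2; 2; 1; 1; 3; 1; 2; 0; 1; 2];
  [:: 3; 0; 2; 4; 1; 5; 0; 1; 2; 3; 4; 5; 0; 3; 2; 2; 1; 1; 3; 1; 2; 0; 2; 1];
  [:: 3; 2; 1; 5; 4; 0; 0; 1; 4; 5; 2; 3; 0; 0; 2; 2; 2; 0; 3; 0; 1; 1; 3; 3];
  [:: 1; 3; 2; 5; 4; 0; 0; 1; 4; 5; 2; 3; 0; 0; 0; 2; 2; 0; 3; 0; 1; 1; 3; 3];
  [:: 3; 2; 1; 5; 4; 0; 0; 1; 4; 5; 3; 2; 0; 0; 2; 2; 2; 0; 3; 0; 1; 1; 3; 3];
  [:: 1; 3; 2; 5; 4; 0; 0; 1; 4; 5; 3; 2; 0; 0; 0; 2; 2; 0; 3; 0; 1; 1; 3; 3];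
  [:: 5; 4; 3; 0; 1; 2; 0; 1; 2; 3; 5; 4; 0; 2; 2; 1; 1; 1; 3; 3; 3; 0; 2; 0];
  [:: 5; 4; 3; 0; 1; 2; 0; 1; 2; 3; 4; 5; 0; 2; 2; 1; 1; 1; 3; 3; 3; 0; 0; 2];
  [:: 4; 5; 2; 0; 1; 3; 0; 1; 4; 2; 3; 5; 0; 2; 2; 1; 1; 1; 3; 3; 2; 0; 3; 0];
  [:: 4; 5; 2; 0; 1; 3; 0; 1; 4; 2; 5; 3; 0; 2; 2; 1; 1; 1; 3; 3; 2; 0; 0; 3];
  [:: 5; 4; 3; 0; 1; 2; 0; 1; 4; 3; 2; 5; 0; 2; 2; 1; 1; 1; 3; 3; 0; 0; 3; 2];
  [:: 5; 4; 3; 0; 1; 2; 0; 1; 4; 3; 5; 2; 0; 2; 2; 1; 1; 1; 3; 3; 0; 0; 2; 3];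
  [:: 0; 2; 3; 5; 4; 1; 0; 1; 4; 3; 5; 2; 0; 0; 0; 0; 0; 0; 0; 3; 3; 3; 3; 3];
  [:: 0; 2; 3; 5; 4; 1; 0; 1; 4; 3; 5; 2; 0; 2; 2; 2; 2; 2; 2; 1; 1; 1; 1; 1];
  [:: 3; 4; 5; 0; 1; 2; 0; 1; 2; 4; 3; 5; 0; 0; 2; 1; 1; 1; 3; 3; 3; 2; 2; 0];
  [:: 0; 2; 3; 5; 4; 1; 0; 1; 4; 2; 5; 3; 0; 0; 0; 0; 0; 0; 0; 3; 3; 3; 3; 3];
  [:: 0; 2; 3; 5; 4; 1; 0; 1; 4; 2; 5; 3; 0; 2; 2; 2; 2; 2; 2; 1; 1; 1; 1; 1];
  [:: 3; 4; 5; 0; 1; 2; 0; 1; 2; 5; 3; 4; 0; 0; 2; 1; 1; 1; 3; 3; 3; 0; 2; 2];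
  [:: 2; 5; 4; 0; 1; 3; 0; 1; 2; 5; 3; 4; 0; 0; 2; 1; 1; 1; 3; 3; 2; 2; 3; 0];
  [:: 2; 5; 4; 0; 1; 3; 0; 1; 2; 4; 3; 5; 0; 0; 2; 1; 1; 1; 3; 3; 2; 0; 3; 2];
  [:: 2; 0; 3; 5; 1; 4; 0; 1; 2; 4; 3; 5; 0; 3; 2; 2; 1; 1; 3; 1; 0; 1; 2; 2];
  [:: 2; 0; 3; 5; 1; 4; 0; 1; 2; 5; 3; 4; 0; 3; 2; 2; 1; 1; 3; 1; 0; 2; 2; 1];
  [:: 3; 0; 2; 4; 1; 5; 0; 1; 2; 5; 3; 4; 0; 3; 2; 2; 1; 1; 3; 1; 2; 1; 0; 2];
  [:: 3; 0; 2; 4; 1; 5; 0; 1; 2; 4; 3; 5; 0; 3; 2; 2; 1; 1; 3; 1; 2; 2; 0; 1];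
  [:: 3; 2; 1; 5; 4; 0; 0; 1; 4; 2; 5; 3; 0; 0; 2; 2; 2; 0; 3; 0; 1; 3; 1; 3];
  [:: 1; 3; 2; 5; 4; 0; 0; 1; 4; 2; 5; 3; 0; 0; 0; 2; 2; 0; 3; 0; 1; 3; 1; 3];
  [:: 3; 2; 1; 5; 4; 0; 0; 1; 4; 3; 5; 2; 0; 0; 2; 2; 2; 0; 3; 0; 1; 3; 1; 3];
  [:: 1; 3; 2; 5; 4; 0; 0; 1; 4; 3; 5; 2; 0; 0; 0; 2; 2; 0; 3; 0; 1; 3; 1; 3];
  [:: 0; 2; 3; 5; 4; 1; 0; 1; 4; 3; 2; 5; 0; 0; 0; 0; 0; 0; 0; 3; 3; 3; 3; 3];
  [:: 0; 2; 3; 5; 4; 1; 0; 1; 4; 3; 2; 5; 0; 2; 2; 2; 2; 2; 2; 1; 1; 1; 1; 1];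
  [:: 3; 4; 5; 0; 1; 2; 0; 1; 2; 4; 5; 3; 0; 0; 2; 1; 1; 1; 3; 3; 3; 2; 0; 2];
  [:: 0; 2; 3; 5; 4; 1; 0; 1; 4; 2; 3; 5; 0; 0; 0; 0; 0; 0; 0; 3; 3; 3; 3; 3];
  [:: 0; 2; 3; 5; 4; 1; 0; 1; 4; 2; 3; 5; 0; 2; 2; 2; 2; 2; 2; 1; 1; 1; 1; 1];
  [:: 3; 4; 5; 0; 1; 2; 0; 1; 2; 5; 4; 3; 0; 0; 2; 1; 1; 1; 3; 3; 3; 0; 2; 2];
  [:: 2; 5; 4; 0; 1; 3; 0; 1; 2; 5; 4; 3; 0; 0; 2; 1; 1; 1; 3; 3; 2; 2; 0; 3];
  [:: 2; 5; 4; 0; 1; 3; 0; 1; 2; 4; 5; 3; 0; 0; 2; 1; 1; 1; 3; 3; 2; 0; 2; 3];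
  [:: 2; 0; 3; 5; 1; 4; 0; 1; 2; 4; 5; 3; 0; 3; 2; 2; 1; 1; 3; 1; 0; 1; 2; 2];
  [:: 2; 0; 3; 5; 1; 4; 0; 1; 2; 5; 4; 3; 0; 3; 2; 2; 1; 1; 3; 1; 0; 2; 1; 2];
  [:: 3; 0; 2; 4; 1; 5; 0; 1; 2; 5; 4; 3; 0; 3; 2; 2; 1; 1; 3; 1; 2; 1; 2; 0];
  [:: 3; 0; 2; 4; 1; 5; 0; 1; 2; 4; 5; 3; 0; 3; 2; 2; 1; 1; 3; 1; 2; 2; 1; 0];
  [:: 3; 2; 1; 5; 4; 0; 0; 1; 4; 2; 3; 5; 0; 0; 2; 2; 2; 0; 3; 0; 1; 3; 3; 1];
  [:: 1; 3; 2; 5; 4; 0; 0; 1; 4; 2; 3; 5; 0; 0; 0; 2; 2; 0; 3; 0; 1; 3; 3; 1];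
  [:: 3; 2; 1; 5; 4; 0; 0; 1; 4; 3; 2; 5; 0; 0; 2; 2; 2; 0; 3; 0; 1; 3; 3; 1];
  [:: 1; 3; 2; 5; 4; 0; 0; 1; 4; 3; 2; 5; 0; 0; 0; 2; 2; 0; 3; 0; 1; 3; 3; 1];
  [:: 4; 2; 0; 3; 1; 5; 0; 1; 4; 5; 2; 3; 0; 0; 3; 2; 1; 1; 3; 1; 0; 1; 0; 2];
  [:: 4; 2; 0; 3; 1; 5; 0; 1; 4; 5; 3; 2; 0; 0; 3; 2; 1; 1; 3; 1; 0; 1; 2; 0];
  [:: 4; 2; 0; 3; 1; 5; 0; 1; 4; 2; 5; 3; 0; 0; 3; 2; 1; 1; 3; 1; 0; 0; 1; 2];
  [:: 4; 2; 0; 3; 1; 5; 0; 1; 4; 2; 3; 5; 0; 0; 3; 2; 1; 1; 3; 1; 0; 0; 2; 1];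
  [:: 4; 2; 0; 3; 1; 5; 0; 1; 4; 3; 5; 2; 0; 0; 3; 2; 1; 1; 3; 1; 0; 2; 1; 0];
  [:: 4; 2; 0; 3; 1; 5; 0; 1; 4; 3; 2; 5; 0; 0; 3; 2; 1; 1; 3; 1; 0; 2; 0; 1];
  [:: 5; 2; 3; 1; 0; 4; 0; 1; 4; 3; 2; 5; 0; 0; 2; 2; 0; 1; 3; 1; 1; 1; 3; 3];
  [:: 5; 2; 3; 1; 0; 4; 0; 1; 4; 3; 5; 2; 0; 0; 2; 2; 0; 1; 3; 1; 1; 1; 3; 3];
  [:: 5; 2; 3; 1; 0; 4; 0; 1; 4; 2; 3; 5; 0; 0; 2; 2; 0; 1; 3; 1; 1; 3; 1; 3];
  [:: 5; 2; 3; 1; 0; 4; 0; 1; 4; 5; 3; 2; 0; 0; 2; 2; 0; 1; 3; 1; 1; 3; 1; 3];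
  [:: 5; 2; 3; 1; 0; 4; 0; 1; 4; 2; 5; 3; 0; 0; 2; 2; 0; 1; 3; 1; 1; 3; 3; 1];
  [:: 5; 2; 3; 1; 0; 4; 0; 1; 4; 5; 2; 3; 0; 0; 2; 2; 0; 1; 3; 1; 1; 3; 3; 1];
  [:: 4; 1; 5; 3; 0; 2; 0; 1; 2; 3; 5; 4; 0; 0; 2; 2; 0; 1; 3; 3; 1; 1; 1; 3];
  [:: 4; 1; 5; 3; 0; 2; 0; 1; 2; 5; 3; 4; 0; 0; 2; 2; 0; 1; 3; 3; 1; 1; 1; 3];
  [:: 4; 1; 5; 3; 0; 2; 0; 1; 2; 3; 4; 5; 0; 0; 2; 2; 0; 1; 3; 3; 1; 1; 3; 1];
  [:: 4; 1; 5; 3; 0; 2; 0; 1; 2; 5; 4; 3; 0; 0; 2; 2; 0; 1; 3; 3; 1; 1; 3; 1];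
  [:: 4; 1; 5; 3; 0; 2; 0; 1; 2; 4; 3; 5; 0; 0; 2; 2; 0; 1; 3; 3; 1; 3; 1; 1];
  [:: 4; 1; 5; 3; 0; 2; 0; 1; 2; 4; 5; 3; 0; 0; 2; 2; 0; 1; 3; 3; 1; 3; 1; 1];
  [:: 4; 5; 2; 0; 1; 3; 0; 1; 2; 3; 4; 5; 0; 2; 2; 1; 1; 1; 3; 3; 0; 3; 2; 0];
  [:: 4; 5; 2; 0; 1; 3; 0; 1; 2; 3; 5; 4; 0; 2; 2; 1; 1; 1; 3; 3; 0; 3; 0; 2];
  [:: 4; 5; 2; 0; 1; 3; 0; 1; 2; 4; 3; 5; 0; 2; 2; 1; 1; 1; 3; 3; 0; 2; 3; 0];
  [:: 4; 5; 2; 0; 1; 3; 0; 1; 2; 4; 5; 3; 0; 2; 2; 1; 1; 1; 3; 3; 0; 2; 0; 3];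
  [:: 4; 5; 2; 0; 1; 3; 0; 1; 2; 5; 3; 4; 0; 2; 2; 1; 1; 1; 3; 3; 0; 0; 3; 2];
  [:: 4; 5; 2; 0; 1; 3; 0; 1; 2; 5; 4; 3; 0; 2; 2; 1; 1; 1; 3; 3; 0; 0; 2; 3];
  [:: 0; 3; 2; 4; 5; 1; 0; 1; 2; 5; 4; 3; 0; 0; 0; 0; 0; 0; 0; 3; 3; 3; 3; 3];
  [:: 0; 3; 2; 4; 5; 1; 0; 1; 2; 5; 4; 3; 0; 2; 2; 2; 2; 2; 2; 1; 1; 1; 1; 1];
  [:: 3; 4; 5; 0; 1; 2; 0; 1; 4; 2; 3; 5; 0; 0; 2; 1; 1; 1; 3; 3; 2; 3; 2; 0];
  [:: 0; 3; 2; 4; 5; 1; 0; 1; 2; 4; 5; 3; 0; 0; 0; 0; 0; 0; 0; 3; 3; 3; 3; 3];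
  [:: 0; 3; 2; 4; 5; 1; 0; 1; 2; 4; 5; 3; 0; 2; 2; 2; 2; 2; 2; 1; 1; 1; 1; 1];
  [:: 3; 4; 5; 0; 1; 2; 0; 1; 4; 3; 2; 5; 0; 0; 2; 1; 1; 1; 3; 3; 2; 2; 3; 0];
  [:: 2; 5; 4; 0; 1; 3; 0; 1; 4; 3; 2; 5; 0; 0; 2; 1; 1; 1; 3; 3; 0; 3; 2; 2];
  [:: 2; 5; 4; 0; 1; 3; 0; 1; 4; 2; 3; 5; 0; 0; 2; 1; 1; 1; 3; 3; 0; 2; 3; 2];
  [:: 2; 0; 3; 5; 1; 4; 0; 1; 4; 2; 3; 5; 0; 3; 2; 2; 1; 1; 3; 1; 1; 0; 2; 2];
  [:: 2; 0; 3; 5; 1; 4; 0; 1; 4; 3; 2; 5; 0; 3; 2; 2; 1; 1; 3; 1; 1; 2; 0; 2];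
  [:: 3; 0; 2; 4; 1; 5; 0; 1; 4; 3; 2; 5; 0; 3; 2; 2; 1; 1; 3; 1; 2; 0; 2; 1];
  [:: 3; 0; 2; 4; 1; 5; 0; 1; 4; 2; 3; 5; 0; 3; 2; 2; 1; 1; 3; 1; 2; 2; 0; 1];
  [:: 3; 2; 1; 5; 4; 0; 0; 1; 2; 4; 5; 3; 0; 0; 2; 2; 2; 0; 3; 0; 3; 1; 1; 3];
  [:: 1; 3; 2; 5; 4; 0; 0; 1; 2; 4; 5; 3; 0; 0; 0; 2; 2; 0; 3; 0; 3; 1; 1; 3];
  [:: 3; 2; 1; 5; 4; 0; 0; 1; 2; 5; 4; 3; 0; 0; 2; 2; 2; 0; 3; 0; 3; 1; 1; 3];
  [:: 1; 3; 2; 5; 4; 0; 0; 1; 2; 5; 4; 3; 0; 0; 0; 2; 2; 0; 3; 0; 3; 1; 1; 3];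
  [:: 0; 3; 2; 4; 5; 1; 0; 1; 2; 5; 3; 4; 0; 0; 0; 0; 0; 0; 0; 3; 3; 3; 3; 3];
  [:: 0; 3; 2; 4; 5; 1; 0; 1; 2; 5; 3; 4; 0; 2; 2; 2; 2; 2; 2; 1; 1; 1; 1; 1];
  [:: 3; 4; 5; 0; 1; 2; 0; 1; 4; 2; 5; 3; 0; 0; 2; 1; 1; 1; 3; 3; 2; 3; 0; 2];
  [:: 0; 3; 2; 4; 5; 1; 0; 1; 2; 4; 3; 5; 0; 0; 0; 0; 0; 0; 0; 3; 3; 3; 3; 3];
  [:: 0; 3; 2; 4; 5; 1; 0; 1; 2; 4; 3; 5; 0; 2; 2; 2; 2; 2; 2; 1; 1; 1; 1; 1];
  [:: 3; 4; 5; 0; 1; 2; 0; 1; 4; 3; 5; 2; 0; 0; 2; 1; 1; 1; 3; 3; 2; 2; 0; 3];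
  [:: 2; 5; 4; 0; 1; 3; 0; 1; 4; 3; 5; 2; 0; 0; 2; 1; 1; 1; 3; 3; 0; 3; 2; 2];
  [:: 2; 5; 4; 0; 1; 3; 0; 1; 4; 2; 5; 3; 0; 0; 2; 1; 1; 1; 3; 3; 0; 2; 2; 3];
  [:: 2; 0; 3; 5; 1; 4; 0; 1; 4; 2; 5; 3; 0; 3; 2; 2; 1; 1; 3; 1; 1; 0; 2; 2];
  [:: 2; 0; 3; 5; 1; 4; 0; 1; 4; 3; 5; 2; 0; 3; 2; 2; 1; 1; 3; 1; 1; 2; 2; 0];
  [:: 3; 0; 2; 4; 1; 5; 0; 1; 4; 3; 5; 2; 0; 3; 2; 2; 1; 1; 3; 1; 2; 0; 1; 2];
  [:: 3; 0; 2; 4; 1; 5; 0; 1; 4; 2; 5; 3; 0; 3; 2; 2; 1; 1; 3; 1; 2; 2; 1; 0];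
  [:: 3; 2; 1; 5; 4; 0; 0; 1; 2; 4; 3; 5; 0; 0; 2; 2; 2; 0; 3; 0; 3; 1; 3; 1];
  [:: 1; 3; 2; 5; 4; 0; 0; 1; 2; 4; 3; 5; 0; 0; 0; 2; 2; 0; 3; 0; 3; 1; 3; 1];
  [:: 3; 2; 1; 5; 4; 0; 0; 1; 2; 5; 3; 4; 0; 0; 2; 2; 2; 0; 3; 0; 3; 1; 3; 1];
  [:: 1; 3; 2; 5; 4; 0; 0; 1; 2; 5; 3; 4; 0; 0; 0; 2; 2; 0; 3; 0; 3; 1; 3; 1];
  [:: 5; 3; 0; 2; 1; 4; 0; 1; 4; 5; 3; 2; 0; 0; 3; 2; 1; 1; 3; 1; 1; 0; 0; 2];
  [:: 5; 3; 0; 2; 1; 4; 0; 1; 4; 5; 2; 3; 0; 0; 3; 2; 1; 1; 3; 1; 1; 0; 2; 0];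
  [:: 4; 2; 0; 3; 1; 5; 0; 1; 2; 4; 5; 3; 0; 0; 3; 2; 1; 1; 3; 1; 0; 0; 1; 2];
  [:: 4; 2; 0; 3; 1; 5; 0; 1; 2; 4; 3; 5; 0; 0; 3; 2; 1; 1; 3; 1; 0; 0; 2; 1];
  [:: 5; 3; 0; 2; 1; 4; 0; 1; 2; 5; 4; 3; 0; 0; 3; 2; 1; 1; 3; 1; 2; 0; 1; 0];
  [:: 5; 3; 0; 2; 1; 4; 0; 1; 2; 5; 3; 4; 0; 0; 3; 2; 1; 1; 3; 1; 2; 0; 0; 1];
  [:: 0; 3; 2; 4; 5; 1; 0; 1; 2; 3; 5; 4; 0; 0; 0; 0; 0; 0; 0; 3; 3; 3; 3; 3];
  [:: 0; 3; 2; 4; 5; 1; 0; 1; 2; 3; 5; 4; 0; 2; 2; 2; 2; 2; 2; 1; 1; 1; 1; 1];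
  [:: 3; 4; 5; 0; 1; 2; 0; 1; 4; 5; 2; 3; 0; 0; 2; 1; 1; 1; 3; 3; 2; 0; 3; 2];
  [:: 0; 3; 2; 4; 5; 1; 0; 1; 2; 3; 4; 5; 0; 0; 0; 0; 0; 0; 0; 3; 3; 3; 3; 3];
  [:: 0; 3; 2; 4; 5; 1; 0; 1; 2; 3; 4; 5; 0; 2; 2; 2; 2; 2; 2; 1; 1; 1; 1; 1];
  [:: 3; 4; 5; 0; 1; 2; 0; 1; 4; 5; 3; 2; 0; 0; 2; 1; 1; 1; 3; 3; 2; 0; 2; 3];
  [:: 2; 5; 4; 0; 1; 3; 0; 1; 4; 5; 3; 2; 0; 0; 2; 1; 1; 1; 3; 3; 0; 2; 3; 2];
  [:: 2; 5; 4; 0; 1; 3; 0; 1; 4; 5; 2; 3; 0; 0; 2; 1; 1; 1; 3; 3; 0; 2; 2; 3];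
  [:: 2; 0; 3; 5; 1; 4; 0; 1; 4; 5; 2; 3; 0; 3; 2; 2; 1; 1; 3; 1; 1; 2; 0; 2];
  [:: 2; 0; 3; 5; 1; 4; 0; 1; 4; 5; 3; 2; 0; 3; 2; 2; 1; 1; 3; 1; 1; 2; 2; 0];
  [:: 3; 0; 2; 4; 1; 5; 0; 1; 4; 5; 3; 2; 0; 3; 2; 2; 1; 1; 3; 1; 2; 1; 0; 2];
  [:: 3; 0; 2; 4; 1; 5; 0; 1; 4; 5; 2; 3; 0; 3; 2; 2; 1; 1; 3; 1; 2; 1; 2; 0];
  [:: 3; 2; 1; 5; 4; 0; 0; 1; 2; 3; 4; 5; 0; 0; 2; 2; 2; 0; 3; 0; 3; 3; 1; 1];
  [:: 1; 3; 2; 5; 4; 0; 0; 1; 2; 3; 4; 5; 0; 0; 0; 2; 2; 0; 3; 0; 3; 3; 1; 1];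
  [:: 3; 2; 1; 5; 4; 0; 0; 1; 2; 3; 5; 4; 0; 0; 2; 2; 2; 0; 3; 0; 3; 3; 1; 1];
  [:: 1; 3; 2; 5; 4; 0; 0; 1; 2; 3; 5; 4; 0; 0; 0; 2; 2; 0; 3; 0; 3; 3; 1; 1];
  [:: 5; 3; 0; 2; 1; 4; 0; 1; 4; 3; 5; 2; 0; 0; 3; 2; 1; 1; 3; 1; 1; 0; 0; 2];
  [:: 5; 3; 0; 2; 1; 4; 0; 1; 4; 2; 5; 3; 0; 0; 3; 2; 1; 1; 3; 1; 1; 2; 0; 0];
  [:: 4; 2; 0; 3; 1; 5; 0; 1; 2; 5; 4; 3; 0; 0; 3; 2; 1; 1; 3; 1; 0; 1; 0; 2];
  [:: 4; 2; 0; 3; 1; 5; 0; 1; 2; 3; 4; 5; 0; 0; 3; 2; 1; 1; 3; 1; 0; 2; 0; 1];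
  [:: 5; 3; 0; 2; 1; 4; 0; 1; 2; 4; 5; 3; 0; 0; 3; 2; 1; 1; 3; 1; 2; 1; 0; 0];
  [:: 5; 3; 0; 2; 1; 4; 0; 1; 2; 3; 5; 4; 0; 0; 3; 2; 1; 1; 3; 1; 2; 0; 0; 1];
  [:: 5; 3; 0; 2; 1; 4; 0; 1; 4; 3; 2; 5; 0; 0; 3; 2; 1; 1; 3; 1; 1; 0; 2; 0];
  [:: 5; 3; 0; 2; 1; 4; 0; 1; 4; 2; 3; 5; 0; 0; 3; 2; 1; 1; 3; 1; 1; 2; 0; 0];
  [:: 4; 2; 0; 3; 1; 5; 0; 1; 2; 5; 3; 4; 0; 0; 3; 2; 1; 1; 3; 1; 0; 1; 2; 0];
  [:: 4; 2; 0; 3; 1; 5; 0; 1; 2; 3; 5; 4; 0; 0; 3; 2; 1; 1; 3; 1; 0; 2; 1; 0];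
  [:: 5; 3; 0; 2; 1; 4; 0; 1; 2; 4; 3; 5; 0; 0; 3; 2; 1; 1; 3; 1; 2; 1; 0; 0];
  [:: 5; 3; 0; 2; 1; 4; 0; 1; 2; 3; 4; 5; 0; 0; 3; 2; 1; 1; 3; 1; 2; 0; 1; 0];
  [:: 3; 2; 5; 4; 0; 1; 0; 1; 4; 5; 2; 3; 0; 0; 2; 2; 0; 1; 3; 3; 1; 1; 3; 3];
  [:: 3; 2; 5; 4; 0; 1; 0; 1; 4; 5; 3; 2; 0; 0; 2; 2; 0; 1; 3; 3; 1; 1; 3; 3];
  [:: 3; 2; 5; 4; 0; 1; 0; 1; 4; 2; 5; 3; 0; 0; 2; 2; 0; 1; 3; 3; 1; 3; 1; 3];
  [:: 3; 2; 5; 4; 0; 1; 0; 1; 4; 3; 5; 2; 0; 0; 2; 2; 0; 1; 3; 3; 1; 3; 1; 3];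
  [:: 3; 2; 5; 4; 0; 1; 0; 1; 4; 2; 3; 5; 0; 0; 2; 2; 0; 1; 3; 3; 1; 3; 3; 1];
  [:: 3; 2; 5; 4; 0; 1; 0; 1; 4; 3; 2; 5; 0; 0; 2; 2; 0; 1; 3; 3; 1; 3; 3; 1];
  [:: 3; 2; 5; 4; 0; 1; 0; 1; 2; 4; 5; 3; 0; 0; 2; 2; 0; 1; 3; 3; 3; 1; 1; 3];
  [:: 3; 2; 5; 4; 0; 1; 0; 1; 2; 5; 4; 3; 0; 0; 2; 2; 0; 1; 3; 3; 3; 1; 1; 3];
  [:: 3; 2; 5; 4; 0; 1; 0; 1; 2; 4; 3; 5; 0; 0; 2; 2; 0; 1; 3; 3; 3; 1; 3; 1];
  [:: 3; 2; 5; 4; 0; 1; 0; 1; 2; 5; 3; 4; 0; 0; 2; 2; 0; 1; 3; 3; 3; 1; 3; 1];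
  [:: 3; 2; 5; 4; 0; 1; 0; 1; 2; 3; 4; 5; 0; 0; 2; 2; 0; 1; 3; 3; 3; 3; 1; 1];
  [:: 3; 2; 5; 4; 0; 1; 0; 1; 2; 3; 5; 4; 0; 0; 2; 2; 0; 1; 3; 3; 3; 3; 1; 1];
  [:: 1; 0; 3; 2; 4; 5; 0; 1; 4; 5; 3; 2; 0; 1; 2; 2; 1; 1; 3; 2; 3; 3; 0; 0];
  [:: 1; 0; 3; 2; 4; 5; 0; 1; 4; 3; 5; 2; 0; 1; 2; 2; 1; 1; 3; 2; 3; 0; 3; 0];
  [:: 3; 1; 0; 5; 4; 2; 0; 1; 4; 2; 3; 5; 0; 2; 1; 2; 1; 1; 3; 0; 3; 3; 2; 0];
  [:: 3; 1; 0; 5; 4; 2; 0; 1; 4; 3; 2; 5; 0; 2; 1; 2; 1; 1; 3; 0; 3; 2; 3; 0];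
  [:: 1; 0; 3; 2; 4; 5; 0; 1; 4; 5; 2; 3; 0; 1; 2; 2; 1; 1; 3; 2; 3; 3; 0; 0];
  [:: 1; 0; 3; 2; 4; 5; 0; 1; 4; 3; 2; 5; 0; 1; 2; 2; 1; 1; 3; 2; 3; 0; 0; 3];
  [:: 3; 1; 0; 5; 4; 2; 0; 1; 4; 2; 5; 3; 0; 2; 1; 2; 1; 1; 3; 0; 3; 3; 0; 2];
  [:: 3; 1; 0; 5; 4; 2; 0; 1; 4; 3; 5; 2; 0; 2; 1; 2; 1; 1; 3; 0; 3; 2; 0; 3];
  [:: 0; 1; 4; 5; 2; 3; 0; 1; 2; 4; 3; 5; 0; 1; 3; 3; 2; 2; 2; 3; 0; 1; 0; 1];
  [:: 0; 1; 4; 5; 2; 3; 0; 1; 2; 4; 5; 3; 0; 1; 3; 3; 2; 2; 2; 3; 0; 1; 1; 0];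
  [:: 1; 5; 0; 3; 2; 4; 0; 1; 2; 4; 5; 3; 0; 0; 1; 2; 1; 1; 3; 2; 3; 3; 2; 0];
  [:: 1; 5; 0; 3; 2; 4; 0; 1; 2; 4; 3; 5; 0; 0; 1; 2; 1; 1; 3; 2; 3; 3; 0; 2];
  [:: 0; 4; 1; 3; 2; 5; 0; 1; 2; 4; 5; 3; 0; 1; 3; 3; 2; 2; 2; 1; 0; 3; 0; 1];
  [:: 0; 4; 1; 3; 2; 5; 0; 1; 2; 4; 3; 5; 0; 1; 3; 3; 2; 2; 2; 1; 0; 3; 1; 0];
  [:: 5; 2; 3; 4; 1; 0; 0; 1; 4; 3; 2; 5; 0; 0; 2; 2; 2; 0; 3; 1; 0; 1; 3; 3];
  [:: 4; 5; 2; 3; 1; 0; 0; 1; 4; 3; 2; 5; 0; 0; 0; 2; 2; 0; 3; 1; 0; 1; 3; 3];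
  [:: 5; 2; 3; 4; 1; 0; 0; 1; 4; 3; 5; 2; 0; 0; 2; 2; 2; 0; 3; 1; 0; 1; 3; 3];
  [:: 4; 5; 2; 3; 1; 0; 0; 1; 4; 3; 5; 2; 0; 0; 0; 2; 2; 0; 3; 1; 0; 1; 3; 3];
  [:: 1; 0; 3; 2; 4; 5; 0; 1; 4; 2; 5; 3; 0; 1; 2; 2; 1; 1; 3; 2; 3; 0; 3; 0];
  [:: 1; 0; 3; 2; 4; 5; 0; 1; 4; 2; 3; 5; 0; 1; 2; 2; 1; 1; 3; 2; 3; 0; 0; 3];
  [:: 3; 1; 0; 5; 4; 2; 0; 1; 4; 5; 2; 3; 0; 2; 1; 2; 1; 1; 3; 0; 3; 0; 3; 2];
  [:: 3; 1; 0; 5; 4; 2; 0; 1; 4; 5; 3; 2; 0; 2; 1; 2; 1; 1; 3; 0; 3; 0; 2; 3];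
  [:: 0; 1; 4; 5; 2; 3; 0; 1; 2; 3; 4; 5; 0; 1; 3; 3; 2; 2; 2; 3; 0; 0; 1; 1];
  [:: 0; 1; 4; 5; 2; 3; 0; 1; 2; 5; 4; 3; 0; 1; 3; 3; 2; 2; 2; 3; 0; 1; 1; 0];
  [:: 1; 5; 0; 3; 2; 4; 0; 1; 2; 5; 4; 3; 0; 0; 1; 2; 1; 1; 3; 2; 3; 2; 3; 0];
  [:: 1; 5; 0; 3; 2; 4; 0; 1; 2; 3; 4; 5; 0; 0; 1; 2; 1; 1; 3; 2; 3; 0; 3; 2];
  [:: 0; 4; 1; 3; 2; 5; 0; 1; 2; 5; 4; 3; 0; 1; 3; 3; 2; 2; 2; 1; 0; 0; 3; 1];
  [:: 0; 4; 1; 3; 2; 5; 0; 1; 2; 3; 4; 5; 0; 1; 3; 3; 2; 2; 2; 1; 0; 1; 3; 0];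
  [:: 5; 2; 3; 4; 1; 0; 0; 1; 4; 2; 3; 5; 0; 0; 2; 2; 2; 0; 3; 1; 0; 3; 1; 3];
  [:: 4; 5; 2; 3; 1; 0; 0; 1; 4; 2; 3; 5; 0; 0; 0; 2; 2; 0; 3; 1; 0; 3; 1; 3];
  [:: 5; 2; 3; 4; 1; 0; 0; 1; 4; 5; 3; 2; 0; 0; 2; 2; 2; 0; 3; 1; 0; 3; 1; 3];
  [:: 4; 5; 2; 3; 1; 0; 0; 1; 4; 5; 3; 2; 0; 0; 0; 2; 2; 0; 3; 1; 0; 3; 1; 3];
  [:: 0; 1; 4; 5; 2; 3; 0; 1; 2; 3; 5; 4; 0; 1; 3; 3; 2; 2; 2; 3; 0; 0; 1; 1];
  [:: 0; 1; 4; 5; 2; 3; 0; 1; 2; 5; 3; 4; 0; 1; 3; 3; 2; 2; 2; 3; 0; 1; 0; 1];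
  [:: 1; 5; 0; 3; 2; 4; 0; 1; 2; 5; 3; 4; 0; 0; 1; 2; 1; 1; 3; 2; 3; 2; 0; 3];
  [:: 1; 5; 0; 3; 2; 4; 0; 1; 2; 3; 5; 4; 0; 0; 1; 2; 1; 1; 3; 2; 3; 0; 2; 3];
  [:: 0; 4; 1; 3; 2; 5; 0; 1; 2; 5; 3; 4; 0; 1; 3; 3; 2; 2; 2; 1; 0; 0; 1; 3];
  [:: 0; 4; 1; 3; 2; 5; 0; 1; 2; 3; 5; 4; 0; 1; 3; 3; 2; 2; 2; 1; 0; 1; 0; 3];
  [:: 5; 2; 3; 4; 1; 0; 0; 1; 4; 2; 5; 3; 0; 0; 2; 2; 2; 0; 3; 1; 0; 3; 3; 1];
  [:: 4; 5; 2; 3; 1; 0; 0; 1; 4; 2; 5; 3; 0; 0; 0; 2; 2; 0; 3; 1; 0; 3; 3; 1];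
  [:: 5; 2; 3; 4; 1; 0; 0; 1; 4; 5; 2; 3; 0; 0; 2; 2; 2; 0; 3; 1; 0; 3; 3; 1];
  [:: 4; 5; 2; 3; 1; 0; 0; 1; 4; 5; 2; 3; 0; 0; 0; 2; 2; 0; 3; 1; 0; 3; 3; 1];
  [:: 0; 1; 2; 5; 4; 3; 0; 1; 4; 3; 2; 5; 0; 1; 1; 3; 2; 2; 2; 3; 0; 0; 3; 1];
  [:: 0; 1; 2; 5; 4; 3; 0; 1; 4; 3; 5; 2; 0; 1; 1; 3; 2; 2; 2; 3; 0; 0; 1; 3];
  [:: 0; 1; 2; 5; 4; 3; 0; 1; 4; 2; 3; 5; 0; 1; 1; 3; 2; 2; 2; 3; 0; 3; 0; 1];
  [:: 0; 1; 2; 5; 4; 3; 0; 1; 4; 2; 5; 3; 0; 1; 1; 3; 2; 2; 2; 3; 0; 3; 1; 0];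
  [:: 0; 1; 2; 5; 4; 3; 0; 1; 4; 5; 3; 2; 0; 1; 1; 3; 2; 2; 2; 3; 0; 1; 0; 3];
  [:: 0; 1; 2; 5; 4; 3; 0; 1; 4; 5; 2; 3; 0; 1; 1; 3; 2; 2; 2; 3; 0; 1; 3; 0];
  [:: 1; 0; 2; 3; 5; 4; 0; 1; 2; 5; 4; 3; 0; 1; 2; 2; 1; 1; 3; 2; 0; 3; 3; 0];
  [:: 3; 1; 0; 5; 4; 2; 0; 1; 2; 4; 3; 5; 0; 2; 1; 2; 1; 1; 3; 0; 3; 3; 2; 0];
  [:: 2; 1; 0; 4; 5; 3; 0; 1; 2; 5; 3; 4; 0; 2; 1; 2; 1; 1; 3; 0; 2; 3; 3; 0];
  [:: 1; 0; 2; 3; 5; 4; 0; 1; 2; 5; 3; 4; 0; 1; 2; 2; 1; 1; 3; 2; 0; 3; 0; 3];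
  [:: 3; 1; 0; 5; 4; 2; 0; 1; 2; 4; 5; 3; 0; 2; 1; 2; 1; 1; 3; 0; 3; 3; 0; 2];
  [:: 2; 1; 0; 4; 5; 3; 0; 1; 2; 5; 4; 3; 0; 2; 1; 2; 1; 1; 3; 0; 2; 3; 0; 3];
  [:: 0; 1; 4; 5; 2; 3; 0; 1; 4; 2; 3; 5; 0; 1; 3; 3; 2; 2; 2; 3; 1; 0; 0; 1];
  [:: 0; 1; 4; 5; 2; 3; 0; 1; 4; 2; 5; 3; 0; 1; 3; 3; 2; 2; 2; 3; 1; 0; 1; 0];
  [:: 1; 5; 0; 3; 2; 4; 0; 1; 4; 2; 5; 3; 0; 0; 1; 2; 1; 1; 3; 2; 3; 3; 2; 0];
  [:: 1; 5; 0; 3; 2; 4; 0; 1; 4; 2; 3; 5; 0; 0; 1; 2; 1; 1; 3; 2; 3; 3; 0; 2];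
  [:: 0; 4; 1; 3; 2; 5; 0; 1; 4; 2; 5; 3; 0; 1; 3; 3; 2; 2; 2; 1; 3; 0; 0; 1];
  [:: 0; 4; 1; 3; 2; 5; 0; 1; 4; 2; 3; 5; 0; 1; 3; 3; 2; 2; 2; 1; 3; 0; 1; 0];
  [:: 4; 3; 2; 5; 1; 0; 0; 1; 2; 5; 3; 4; 0; 0; 2; 2; 2; 0; 3; 1; 1; 0; 3; 3];
  [:: 5; 4; 3; 2; 1; 0; 0; 1; 2; 5; 3; 4; 0; 0; 0; 2; 2; 0; 3; 1; 1; 0; 3; 3];
  [:: 4; 3; 2; 5; 1; 0; 0; 1; 2; 5; 4; 3; 0; 0; 2; 2; 2; 0; 3; 1; 1; 0; 3; 3];
  [:: 5; 4; 3; 2; 1; 0; 0; 1; 2; 5; 4; 3; 0; 0; 0; 2; 2; 0; 3; 1; 1; 0; 3; 3];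
  [:: 1; 0; 2; 3; 5; 4; 0; 1; 2; 4; 5; 3; 0; 1; 2; 2; 1; 1; 3; 2; 0; 3; 3; 0];
  [:: 3; 1; 0; 5; 4; 2; 0; 1; 2; 3; 4; 5; 0; 2; 1; 2; 1; 1; 3; 0; 3; 2; 3; 0];
  [:: 2; 1; 0; 4; 5; 3; 0; 1; 2; 3; 5; 4; 0; 2; 1; 2; 1; 1; 3; 0; 2; 3; 3; 0];
  [:: 2; 3; 5; 4; 1; 0; 0; 1; 4; 5; 3; 2; 0; 0; 0; 0; 0; 2; 1; 3; 3; 3; 3; 3];
  [:: 2; 3; 5; 4; 1; 0; 0; 1; 4; 5; 2; 3; 0; 0; 0; 0; 0; 2; 1; 3; 3; 3; 3; 3];
  [:: 2; 3; 5; 4; 1; 0; 0; 1; 4; 3; 5; 2; 0; 0; 0; 0; 0; 2; 1; 3; 3; 3; 3; 3];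
  [:: 2; 3; 5; 4; 1; 0; 0; 1; 4; 2; 5; 3; 0; 0; 0; 0; 0; 2; 1; 3; 3; 3; 3; 3];
  [:: 2; 3; 5; 4; 1; 0; 0; 1; 4; 3; 2; 5; 0; 0; 0; 0; 0; 2; 1; 3; 3; 3; 3; 3];
  [:: 2; 3; 5; 4; 1; 0; 0; 1; 4; 2; 3; 5; 0; 0; 0; 0; 0; 2; 1; 3; 3; 3; 3; 3];
  [:: 3; 2; 4; 5; 1; 0; 0; 1; 2; 5; 4; 3; 0; 0; 0; 0; 0; 2; 1; 3; 3; 3; 3; 3];
  [:: 3; 2; 4; 5; 1; 0; 0; 1; 2; 4; 5; 3; 0; 0; 0; 0; 0; 2; 1; 3; 3; 3; 3; 3];
  [:: 3; 2; 4; 5; 1; 0; 0; 1; 2; 5; 3; 4; 0; 0; 0; 0; 0; 2; 1; 3; 3; 3; 3; 3];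
  [:: 3; 2; 4; 5; 1; 0; 0; 1; 2; 4; 3; 5; 0; 0; 0; 0; 0; 2; 1; 3; 3; 3; 3; 3];
  [:: 3; 2; 4; 5; 1; 0; 0; 1; 2; 3; 5; 4; 0; 0; 0; 0; 0; 2; 1; 3; 3; 3; 3; 3];
  [:: 3; 2; 4; 5; 1; 0; 0; 1; 2; 3; 4; 5; 0; 0; 0; 0; 0; 2; 1; 3; 3; 3; 3; 3];
  [:: 2; 3; 5; 4; 1; 0; 0; 1; 4; 5; 3; 2; 0; 2; 2; 2; 2; 0; 3; 1; 1; 1; 1; 3];
  [:: 3; 2; 5; 4; 1; 0; 0; 1; 4; 5; 2; 3; 0; 2; 2; 2; 2; 0; 3; 1; 1; 1; 1; 3];
  [:: 2; 3; 5; 4; 1; 0; 0; 1; 4; 3; 5; 2; 0; 2; 2; 2; 2; 0; 3; 1; 1; 1; 1; 3];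
  [:: 3; 2; 5; 4; 1; 0; 0; 1; 4; 2; 5; 3; 0; 2; 2; 2; 2; 0; 3; 1; 1; 1; 1; 3];
  [:: 5; 2; 3; 4; 1; 0; 0; 1; 4; 3; 2; 5; 0; 2; 2; 2; 2; 0; 3; 1; 1; 1; 1; 3];
  [:: 5; 2; 3; 4; 1; 0; 0; 1; 4; 2; 3; 5; 0; 2; 2; 2; 2; 0; 3; 1; 1; 1; 1; 3];
  [:: 3; 2; 4; 5; 1; 0; 0; 1; 2; 5; 4; 3; 0; 2; 2; 2; 2; 0; 3; 1; 1; 1; 1; 3];
  [:: 3; 2; 4; 5; 1; 0; 0; 1; 2; 4; 5; 3; 0; 2; 2; 2; 2; 0; 3; 1; 1; 1; 1; 3];
  [:: 4; 3; 2; 5; 1; 0; 0; 1; 2; 5; 3; 4; 0; 2; 2; 2; 2; 0; 3; 1; 1; 1; 1; 3];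
  [:: 5; 3; 2; 4; 1; 0; 0; 1; 2; 4; 3; 5; 0; 2; 2; 2; 2; 0; 3; 1; 1; 1; 1; 3];
  [:: 4; 3; 2; 5; 1; 0; 0; 1; 2; 3; 5; 4; 0; 2; 2; 2; 2; 0; 3; 1; 1; 1; 1; 3];
  [:: 5; 3; 2; 4; 1; 0; 0; 1; 2; 3; 4; 5; 0; 2; 2; 2; 2; 0; 3; 1; 1; 1; 1; 3];
  [:: 1; 0; 2; 3; 5; 4; 0; 1; 2; 4; 3; 5; 0; 1; 2; 2; 1; 1; 3; 2; 0; 3; 0; 3];
  [:: 3; 1; 0; 5; 4; 2; 0; 1; 2; 3; 5; 4; 0; 2; 1; 2; 1; 1; 3; 0; 3; 2; 0; 3];
  [:: 2; 1; 0; 4; 5; 3; 0; 1; 2; 3; 4; 5; 0; 2; 1; 2; 1; 1; 3; 0; 2; 3; 0; 3];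
  [:: 2; 3; 5; 4; 1; 0; 0; 1; 4; 5; 2; 3; 0; 2; 2; 2; 2; 0; 3; 1; 1; 1; 3; 1];
  [:: 3; 2; 5; 4; 1; 0; 0; 1; 4; 5; 3; 2; 0; 2; 2; 2; 2; 0; 3; 1; 1; 1; 3; 1];
  [:: 2; 3; 5; 4; 1; 0; 0; 1; 4; 3; 2; 5; 0; 2; 2; 2; 2; 0; 3; 1; 1; 1; 3; 1];
  [:: 3; 2; 5; 4; 1; 0; 0; 1; 4; 2; 3; 5; 0; 2; 2; 2; 2; 0; 3; 1; 1; 1; 3; 1];
  [:: 5; 2; 3; 4; 1; 0; 0; 1; 4; 3; 5; 2; 0; 2; 2; 2; 2; 0; 3; 1; 1; 1; 3; 1];
  [:: 5; 2; 3; 4; 1; 0; 0; 1; 4; 2; 5; 3; 0; 2; 2; 2; 2; 0; 3; 1; 1; 1; 3; 1];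
  [:: 3; 2; 4; 5; 1; 0; 0; 1; 2; 5; 3; 4; 0; 2; 2; 2; 2; 0; 3; 1; 1; 1; 3; 1];
  [:: 3; 2; 4; 5; 1; 0; 0; 1; 2; 4; 3; 5; 0; 2; 2; 2; 2; 0; 3; 1; 1; 1; 3; 1];
  [:: 4; 3; 2; 5; 1; 0; 0; 1; 2; 5; 4; 3; 0; 2; 2; 2; 2; 0; 3; 1; 1; 1; 3; 1];
  [:: 5; 3; 2; 4; 1; 0; 0; 1; 2; 4; 5; 3; 0; 2; 2; 2; 2; 0; 3; 1; 1; 1; 3; 1];
  [:: 4; 3; 2; 5; 1; 0; 0; 1; 2; 3; 4; 5; 0; 2; 2; 2; 2; 0; 3; 1; 1; 1; 3; 1];
  [:: 5; 3; 2; 4; 1; 0; 0; 1; 2; 3; 5; 4; 0; 2; 2; 2; 2; 0; 3; 1; 1; 1; 3; 1];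
  [:: 3; 2; 5; 4; 1; 0; 0; 1; 4; 5; 2; 3; 0; 0; 2; 2; 1; 0; 3; 1; 1; 1; 3; 3];
  [:: 3; 2; 5; 4; 1; 0; 0; 1; 4; 5; 3; 2; 0; 0; 2; 2; 1; 0; 3; 1; 1; 1; 3; 3];
  [:: 3; 2; 5; 4; 1; 0; 0; 1; 4; 5; 2; 3; 0; 0; 2; 2; 2; 0; 3; 1; 1; 1; 3; 3];
  [:: 3; 2; 5; 4; 1; 0; 0; 1; 4; 5; 3; 2; 0; 0; 2; 2; 2; 0; 3; 1; 1; 1; 3; 3];
  [:: 5; 2; 3; 4; 1; 0; 0; 1; 4; 3; 2; 5; 0; 0; 2; 2; 2; 0; 3; 1; 1; 1; 3; 3];
  [:: 5; 3; 2; 4; 1; 0; 0; 1; 4; 2; 3; 5; 0; 0; 2; 2; 2; 0; 3; 1; 1; 1; 3; 3];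
  [:: 5; 2; 3; 4; 1; 0; 0; 1; 4; 3; 5; 2; 0; 0; 2; 2; 2; 0; 3; 1; 1; 1; 3; 3];
  [:: 5; 3; 2; 4; 1; 0; 0; 1; 4; 2; 5; 3; 0; 0; 2; 2; 2; 0; 3; 1; 1; 1; 3; 3];
  [:: 4; 3; 2; 5; 1; 0; 0; 1; 2; 5; 3; 4; 0; 0; 2; 2; 2; 0; 3; 1; 1; 1; 3; 3];
  [:: 5; 3; 2; 4; 1; 0; 0; 1; 2; 4; 3; 5; 0; 0; 2; 2; 2; 0; 3; 1; 1; 1; 3; 3];
  [:: 4; 3; 2; 5; 1; 0; 0; 1; 2; 5; 4; 3; 0; 0; 2; 2; 2; 0; 3; 1; 1; 1; 3; 3];
  [:: 5; 3; 2; 4; 1; 0; 0; 1; 2; 4; 5; 3; 0; 0; 2; 2; 2; 0; 3; 1; 1; 1; 3; 3];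
  [:: 5; 4; 3; 2; 1; 0; 0; 1; 2; 3; 4; 5; 0; 0; 2; 2; 2; 0; 3; 1; 1; 1; 3; 3];
  [:: 5; 4; 3; 2; 1; 0; 0; 1; 2; 3; 5; 4; 0; 0; 2; 2; 2; 0; 3; 1; 1; 1; 3; 3];
  [:: 1; 0; 2; 3; 5; 4; 0; 1; 2; 3; 5; 4; 0; 1; 2; 2; 1; 1; 3; 2; 0; 0; 3; 3];
  [:: 3; 1; 0; 5; 4; 2; 0; 1; 2; 5; 4; 3; 0; 2; 1; 2; 1; 1; 3; 0; 3; 0; 3; 2];
  [:: 2; 1; 0; 4; 5; 3; 0; 1; 2; 4; 5; 3; 0; 2; 1; 2; 1; 1; 3; 0; 2; 0; 3; 3];
  [:: 0; 1; 4; 5; 2; 3; 0; 1; 4; 3; 2; 5; 0; 1; 3; 3; 2; 2; 2; 3; 1; 0; 0; 1];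
  [:: 0; 1; 4; 5; 2; 3; 0; 1; 4; 5; 2; 3; 0; 1; 3; 3; 2; 2; 2; 3; 1; 1; 0; 0];
  [:: 1; 5; 0; 3; 2; 4; 0; 1; 4; 5; 2; 3; 0; 0; 1; 2; 1; 1; 3; 2; 3; 2; 3; 0];
  [:: 1; 5; 0; 3; 2; 4; 0; 1; 4; 3; 2; 5; 0; 0; 1; 2; 1; 1; 3; 2; 3; 0; 3; 2];
  [:: 0; 4; 1; 3; 2; 5; 0; 1; 4; 5; 2; 3; 0; 1; 3; 3; 2; 2; 2; 1; 3; 0; 0; 1];
  [:: 0; 4; 1; 3; 2; 5; 0; 1; 4; 3; 2; 5; 0; 1; 3; 3; 2; 2; 2; 1; 3; 1; 0; 0];
  [:: 4; 3; 2; 5; 1; 0; 0; 1; 2; 3; 5; 4; 0; 0; 2; 2; 2; 0; 3; 1; 1; 3; 0; 3];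
  [:: 5; 4; 3; 2; 1; 0; 0; 1; 2; 3; 5; 4; 0; 0; 0; 2; 2; 0; 3; 1; 1; 3; 0; 3];
  [:: 4; 3; 2; 5; 1; 0; 0; 1; 2; 4; 5; 3; 0; 0; 2; 2; 2; 0; 3; 1; 1; 3; 0; 3];
  [:: 5; 4; 3; 2; 1; 0; 0; 1; 2; 4; 5; 3; 0; 0; 0; 2; 2; 0; 3; 1; 1; 3; 0; 3];
  [:: 1; 0; 2; 3; 5; 4; 0; 1; 2; 3; 4; 5; 0; 1; 2; 2; 1; 1; 3; 2; 0; 0; 3; 3];
  [:: 3; 1; 0; 5; 4; 2; 0; 1; 2; 5; 3; 4; 0; 2; 1; 2; 1; 1; 3; 0; 3; 0; 2; 3];
  [:: 2; 1; 0; 4; 5; 3; 0; 1; 2; 4; 3; 5; 0; 2; 1; 2; 1; 1; 3; 0; 2; 0; 3; 3];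
  [:: 2; 3; 5; 4; 1; 0; 0; 1; 4; 2; 5; 3; 0; 2; 2; 2; 2; 0; 3; 1; 1; 3; 1; 1];
  [:: 3; 2; 5; 4; 1; 0; 0; 1; 4; 3; 5; 2; 0; 2; 2; 2; 2; 0; 3; 1; 1; 3; 1; 1];
  [:: 2; 3; 5; 4; 1; 0; 0; 1; 4; 2; 3; 5; 0; 2; 2; 2; 2; 0; 3; 1; 1; 3; 1; 1];
  [:: 3; 2; 5; 4; 1; 0; 0; 1; 4; 3; 2; 5; 0; 2; 2; 2; 2; 0; 3; 1; 1; 3; 1; 1];
  [:: 5; 2; 3; 4; 1; 0; 0; 1; 4; 5; 3; 2; 0; 2; 2; 2; 2; 0; 3; 1; 1; 3; 1; 1];
  [:: 5; 2; 3; 4; 1; 0; 0; 1; 4; 5; 2; 3; 0; 2; 2; 2; 2; 0; 3; 1; 1; 3; 1; 1];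
  [:: 3; 2; 4; 5; 1; 0; 0; 1; 2; 3; 5; 4; 0; 2; 2; 2; 2; 0; 3; 1; 1; 3; 1; 1];
  [:: 3; 2; 4; 5; 1; 0; 0; 1; 2; 3; 4; 5; 0; 2; 2; 2; 2; 0; 3; 1; 1; 3; 1; 1];
  [:: 4; 3; 2; 5; 1; 0; 0; 1; 2; 4; 5; 3; 0; 2; 2; 2; 2; 0; 3; 1; 1; 3; 1; 1];
  [:: 5; 3; 2; 4; 1; 0; 0; 1; 2; 5; 4; 3; 0; 2; 2; 2; 2; 0; 3; 1; 1; 3; 1; 1];
  [:: 4; 3; 2; 5; 1; 0; 0; 1; 2; 4; 3; 5; 0; 2; 2; 2; 2; 0; 3; 1; 1; 3; 1; 1];
  [:: 5; 3; 2; 4; 1; 0; 0; 1; 2; 5; 3; 4; 0; 2; 2; 2; 2; 0; 3; 1; 1; 3; 1; 1];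
  [:: 3; 2; 5; 4; 1; 0; 0; 1; 4; 2; 5; 3; 0; 0; 2; 2; 1; 0; 3; 1; 1; 3; 1; 3];
  [:: 3; 2; 5; 4; 1; 0; 0; 1; 4; 3; 5; 2; 0; 0; 2; 2; 1; 0; 3; 1; 1; 3; 1; 3];
  [:: 3; 2; 5; 4; 1; 0; 0; 1; 4; 2; 5; 3; 0; 0; 2; 2; 2; 0; 3; 1; 1; 3; 1; 3];
  [:: 3; 2; 5; 4; 1; 0; 0; 1; 4; 3; 5; 2; 0; 0; 2; 2; 2; 0; 3; 1; 1; 3; 1; 3];
  [:: 5; 2; 3; 4; 1; 0; 0; 1; 4; 2; 3; 5; 0; 0; 2; 2; 2; 0; 3; 1; 1; 3; 1; 3];
  [:: 5; 3; 2; 4; 1; 0; 0; 1; 4; 3; 2; 5; 0; 0; 2; 2; 2; 0; 3; 1; 1; 3; 1; 3];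
  [:: 5; 2; 3; 4; 1; 0; 0; 1; 4; 5; 3; 2; 0; 0; 2; 2; 2; 0; 3; 1; 1; 3; 1; 3];
  [:: 5; 3; 2; 4; 1; 0; 0; 1; 4; 5; 2; 3; 0; 0; 2; 2; 2; 0; 3; 1; 1; 3; 1; 3];
  [:: 4; 3; 2; 5; 1; 0; 0; 1; 2; 3; 5; 4; 0; 0; 2; 2; 2; 0; 3; 1; 1; 3; 1; 3];
  [:: 5; 3; 2; 4; 1; 0; 0; 1; 2; 3; 4; 5; 0; 0; 2; 2; 2; 0; 3; 1; 1; 3; 1; 3];
  [:: 4; 3; 2; 5; 1; 0; 0; 1; 2; 4; 5; 3; 0; 0; 2; 2; 2; 0; 3; 1; 1; 3; 1; 3];
  [:: 5; 3; 2; 4; 1; 0; 0; 1; 2; 5; 4; 3; 0; 0; 2; 2; 2; 0; 3; 1; 1; 3; 1; 3];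
  [:: 5; 4; 3; 2; 1; 0; 0; 1; 2; 4; 3; 5; 0; 0; 2; 2; 2; 0; 3; 1; 1; 3; 1; 3];
  [:: 5; 4; 3; 2; 1; 0; 0; 1; 2; 5; 3; 4; 0; 0; 2; 2; 2; 0; 3; 1; 1; 3; 1; 3];
  [:: 0; 1; 4; 5; 2; 3; 0; 1; 4; 3; 5; 2; 0; 1; 3; 3; 2; 2; 2; 3; 1; 0; 1; 0];
  [:: 0; 1; 4; 5; 2; 3; 0; 1; 4; 5; 3; 2; 0; 1; 3; 3; 2; 2; 2; 3; 1; 1; 0; 0];
  [:: 1; 5; 0; 3; 2; 4; 0; 1; 4; 5; 3; 2; 0; 0; 1; 2; 1; 1; 3; 2; 3; 2; 0; 3];
  [:: 1; 5; 0; 3; 2; 4; 0; 1; 4; 3; 5; 2; 0; 0; 1; 2; 1; 1; 3; 2; 3; 0; 2; 3];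
  [:: 0; 4; 1; 3; 2; 5; 0; 1; 4; 5; 3; 2; 0; 1; 3; 3; 2; 2; 2; 1; 3; 0; 1; 0];
  [:: 0; 4; 1; 3; 2; 5; 0; 1; 4; 3; 5; 2; 0; 1; 3; 3; 2; 2; 2; 1; 3; 1; 0; 0];
  [:: 4; 3; 2; 5; 1; 0; 0; 1; 2; 3; 4; 5; 0; 0; 2; 2; 2; 0; 3; 1; 1; 3; 3; 0];
  [:: 5; 4; 3; 2; 1; 0; 0; 1; 2; 3; 4; 5; 0; 0; 0; 2; 2; 0; 3; 1; 1; 3; 3; 0];
  [:: 4; 3; 2; 5; 1; 0; 0; 1; 2; 4; 3; 5; 0; 0; 2; 2; 2; 0; 3; 1; 1; 3; 3; 0];
  [:: 5; 4; 3; 2; 1; 0; 0; 1; 2; 4; 3; 5; 0; 0; 0; 2; 2; 0; 3; 1; 1; 3; 3; 0];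
  [:: 3; 2; 5; 4; 1; 0; 0; 1; 4; 2; 3; 5; 0; 0; 2; 2; 1; 0; 3; 1; 1; 3; 3; 1];
  [:: 3; 2; 5; 4; 1; 0; 0; 1; 4; 3; 2; 5; 0; 0; 2; 2; 1; 0; 3; 1; 1; 3; 3; 1];
  [:: 3; 2; 5; 4; 1; 0; 0; 1; 4; 2; 3; 5; 0; 0; 2; 2; 2; 0; 3; 1; 1; 3; 3; 1];
  [:: 3; 2; 5; 4; 1; 0; 0; 1; 4; 3; 2; 5; 0; 0; 2; 2; 2; 0; 3; 1; 1; 3; 3; 1];
  [:: 5; 2; 3; 4; 1; 0; 0; 1; 4; 2; 5; 3; 0; 0; 2; 2; 2; 0; 3; 1; 1; 3; 3; 1];
  [:: 5; 3; 2; 4; 1; 0; 0; 1; 4; 3; 5; 2; 0; 0; 2; 2; 2; 0; 3; 1; 1; 3; 3; 1];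
  [:: 5; 2; 3; 4; 1; 0; 0; 1; 4; 5; 2; 3; 0; 0; 2; 2; 2; 0; 3; 1; 1; 3; 3; 1];
  [:: 5; 3; 2; 4; 1; 0; 0; 1; 4; 5; 3; 2; 0; 0; 2; 2; 2; 0; 3; 1; 1; 3; 3; 1];
  [:: 4; 3; 2; 5; 1; 0; 0; 1; 2; 3; 4; 5; 0; 0; 2; 2; 2; 0; 3; 1; 1; 3; 3; 1];
  [:: 5; 3; 2; 4; 1; 0; 0; 1; 2; 3; 5; 4; 0; 0; 2; 2; 2; 0; 3; 1; 1; 3; 3; 1];
  [:: 4; 3; 2; 5; 1; 0; 0; 1; 2; 4; 3; 5; 0; 0; 2; 2; 2; 0; 3; 1; 1; 3; 3; 1];
  [:: 5; 3; 2; 4; 1; 0; 0; 1; 2; 5; 3; 4; 0; 0; 2; 2; 2; 0; 3; 1; 1; 3; 3; 1];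
  [:: 5; 4; 3; 2; 1; 0; 0; 1; 2; 4; 5; 3; 0; 0; 2; 2; 2; 0; 3; 1; 1; 3; 3; 1];
  [:: 5; 4; 3; 2; 1; 0; 0; 1; 2; 5; 4; 3; 0; 0; 2; 2; 2; 0; 3; 1; 1; 3; 3; 1];
  [:: 5; 3; 2; 4; 1; 0; 0; 1; 4; 2; 3; 5; 0; 0; 0; 2; 2; 0; 3; 1; 1; 3; 3; 3];
  [:: 5; 3; 2; 4; 1; 0; 0; 1; 4; 3; 2; 5; 0; 0; 0; 2; 2; 0; 3; 1; 1; 3; 3; 3];
  [:: 5; 3; 2; 4; 1; 0; 0; 1; 4; 2; 5; 3; 0; 0; 0; 2; 2; 0; 3; 1; 1; 3; 3; 3];
  [:: 5; 3; 2; 4; 1; 0; 0; 1; 4; 3; 5; 2; 0; 0; 0; 2; 2; 0; 3; 1; 1; 3; 3; 3];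
  [:: 5; 3; 2; 4; 1; 0; 0; 1; 4; 5; 2; 3; 0; 0; 0; 2; 2; 0; 3; 1; 1; 3; 3; 3];
  [:: 5; 3; 2; 4; 1; 0; 0; 1; 4; 5; 3; 2; 0; 0; 0; 2; 2; 0; 3; 1; 1; 3; 3; 3];
  [:: 5; 4; 3; 2; 1; 0; 0; 1; 2; 3; 4; 5; 0; 0; 0; 2; 2; 0; 3; 1; 1; 3; 3; 3];
  [:: 5; 4; 3; 2; 1; 0; 0; 1; 2; 3; 5; 4; 0; 0; 0; 2; 2; 0; 3; 1; 1; 3; 3; 3];
  [:: 5; 4; 3; 2; 1; 0; 0; 1; 2; 4; 3; 5; 0; 0; 0; 2; 2; 0; 3; 1; 1; 3; 3; 3];
  [:: 5; 4; 3; 2; 1; 0; 0; 1; 2; 5; 3; 4; 0; 0; 0; 2; 2; 0; 3; 1; 1; 3; 3; 3];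
  [:: 5; 4; 3; 2; 1; 0; 0; 1; 2; 4; 5; 3; 0; 0; 0; 2; 2; 0; 3; 1; 1; 3; 3; 3];
  [:: 5; 4; 3; 2; 1; 0; 0; 1; 2; 5; 4; 3; 0; 0; 0; 2; 2; 0; 3; 1; 1; 3; 3; 3];
  [:: 2; 1; 0; 4; 5; 3; 0; 1; 4; 5; 3; 2; 0; 2; 1; 2; 1; 1; 3; 0; 0; 3; 3; 2];
  [:: 2; 1; 0; 4; 5; 3; 0; 1; 4; 5; 2; 3; 0; 2; 1; 2; 1; 1; 3; 0; 0; 3; 2; 3];
  [:: 0; 5; 1; 2; 3; 4; 0; 1; 4; 3; 5; 2; 0; 1; 3; 3; 2; 2; 2; 1; 0; 0; 3; 1];
  [:: 1; 4; 0; 2; 3; 5; 0; 1; 4; 3; 5; 2; 0; 0; 1; 2; 1; 1; 3; 2; 2; 3; 3; 0];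
  [:: 0; 5; 1; 2; 3; 4; 0; 1; 2; 3; 5; 4; 0; 1; 3; 3; 2; 2; 2; 1; 1; 0; 3; 0];
  [:: 1; 4; 0; 2; 3; 5; 0; 1; 2; 3; 5; 4; 0; 0; 1; 2; 1; 1; 3; 2; 0; 3; 3; 2];
  [:: 5; 2; 3; 4; 1; 0; 0; 1; 2; 4; 3; 5; 0; 0; 2; 2; 2; 0; 3; 1; 3; 0; 1; 3];
  [:: 4; 5; 2; 3; 1; 0; 0; 1; 2; 4; 3; 5; 0; 0; 0; 2; 2; 0; 3; 1; 3; 0; 1; 3];
  [:: 4; 3; 2; 5; 1; 0; 0; 1; 4; 5; 2; 3; 0; 0; 2; 2; 2; 0; 3; 1; 3; 0; 1; 3];
  [:: 5; 4; 3; 2; 1; 0; 0; 1; 4; 5; 2; 3; 0; 0; 0; 2; 2; 0; 3; 1; 3; 0; 1; 3];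
  [:: 0; 5; 1; 2; 3; 4; 0; 1; 4; 3; 2; 5; 0; 1; 3; 3; 2; 2; 2; 1; 0; 0; 1; 3];
  [:: 1; 4; 0; 2; 3; 5; 0; 1; 4; 3; 2; 5; 0; 0; 1; 2; 1; 1; 3; 2; 2; 3; 0; 3];
  [:: 0; 5; 1; 2; 3; 4; 0; 1; 2; 3; 4; 5; 0; 1; 3; 3; 2; 2; 2; 1; 1; 0; 0; 3];
  [:: 1; 4; 0; 2; 3; 5; 0; 1; 2; 3; 4; 5; 0; 0; 1; 2; 1; 1; 3; 2; 0; 3; 2; 3];
  [:: 5; 2; 3; 4; 1; 0; 0; 1; 2; 4; 5; 3; 0; 0; 2; 2; 2; 0; 3; 1; 3; 0; 3; 1];
  [:: 4; 5; 2; 3; 1; 0; 0; 1; 2; 4; 5; 3; 0; 0; 0; 2; 2; 0; 3; 1; 3; 0; 3; 1];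
  [:: 4; 3; 2; 5; 1; 0; 0; 1; 4; 5; 3; 2; 0; 0; 2; 2; 2; 0; 3; 1; 3; 0; 3; 1];
  [:: 5; 4; 3; 2; 1; 0; 0; 1; 4; 5; 3; 2; 0; 0; 0; 2; 2; 0; 3; 1; 3; 0; 3; 1];
  [:: 0; 1; 3; 4; 5; 2; 0; 1; 2; 5; 3; 4; 0; 1; 1; 3; 2; 2; 2; 3; 0; 0; 3; 1];
  [:: 0; 1; 3; 4; 5; 2; 0; 1; 2; 5; 4; 3; 0; 1; 1; 3; 2; 2; 2; 3; 0; 0; 1; 3];
  [:: 0; 1; 2; 5; 4; 3; 0; 1; 2; 4; 3; 5; 0; 1; 1; 3; 2; 2; 2; 3; 3; 0; 0; 1];
  [:: 0; 1; 2; 5; 4; 3; 0; 1; 2; 4; 5; 3; 0; 1; 1; 3; 2; 2; 2; 3; 3; 0; 1; 0];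
  [:: 0; 1; 3; 4; 5; 2; 0; 1; 4; 5; 2; 3; 0; 1; 1; 3; 2; 2; 2; 3; 1; 0; 0; 3];
  [:: 0; 1; 3; 4; 5; 2; 0; 1; 4; 5; 3; 2; 0; 1; 1; 3; 2; 2; 2; 3; 1; 0; 3; 0];
  [:: 2; 1; 0; 4; 5; 3; 0; 1; 4; 3; 5; 2; 0; 2; 1; 2; 1; 1; 3; 0; 0; 3; 3; 2];
  [:: 2; 1; 0; 4; 5; 3; 0; 1; 4; 2; 5; 3; 0; 2; 1; 2; 1; 1; 3; 0; 0; 2; 3; 3];
  [:: 0; 5; 1; 2; 3; 4; 0; 1; 4; 5; 3; 2; 0; 1; 3; 3; 2; 2; 2; 1; 0; 3; 0; 1];
  [:: 1; 4; 0; 2; 3; 5; 0; 1; 4; 5; 3; 2; 0; 0; 1; 2; 1; 1; 3; 2; 2; 3; 3; 0];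
  [:: 0; 5; 1; 2; 3; 4; 0; 1; 2; 5; 3; 4; 0; 1; 3; 3; 2; 2; 2; 1; 1; 3; 0; 0];
  [:: 1; 4; 0; 2; 3; 5; 0; 1; 2; 5; 3; 4; 0; 0; 1; 2; 1; 1; 3; 2; 0; 3; 3; 2];
  [:: 5; 2; 3; 4; 1; 0; 0; 1; 2; 3; 4; 5; 0; 0; 2; 2; 2; 0; 3; 1; 3; 1; 0; 3];
  [:: 4; 5; 2; 3; 1; 0; 0; 1; 2; 3; 4; 5; 0; 0; 0; 2; 2; 0; 3; 1; 3; 1; 0; 3];
  [:: 4; 3; 2; 5; 1; 0; 0; 1; 4; 2; 5; 3; 0; 0; 2; 2; 2; 0; 3; 1; 3; 1; 0; 3];
  [:: 5; 4; 3; 2; 1; 0; 0; 1; 4; 2; 5; 3; 0; 0; 0; 2; 2; 0; 3; 1; 3; 1; 0; 3];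
  [:: 2; 1; 0; 4; 5; 3; 0; 1; 4; 3; 2; 5; 0; 2; 1; 2; 1; 1; 3; 0; 0; 3; 2; 3];
  [:: 2; 1; 0; 4; 5; 3; 0; 1; 4; 2; 3; 5; 0; 2; 1; 2; 1; 1; 3; 0; 0; 2; 3; 3];
  [:: 2; 3; 5; 4; 1; 0; 0; 1; 2; 4; 5; 3; 0; 2; 2; 2; 2; 0; 3; 1; 3; 1; 1; 1];
  [:: 2; 3; 5; 4; 1; 0; 0; 1; 2; 5; 4; 3; 0; 2; 2; 2; 2; 0; 3; 1; 3; 1; 1; 1];
  [:: 2; 3; 5; 4; 1; 0; 0; 1; 2; 4; 3; 5; 0; 2; 2; 2; 2; 0; 3; 1; 3; 1; 1; 1];
  [:: 2; 3; 5; 4; 1; 0; 0; 1; 2; 5; 3; 4; 0; 2; 2; 2; 2; 0; 3; 1; 3; 1; 1; 1];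
  [:: 2; 3; 5; 4; 1; 0; 0; 1; 2; 3; 4; 5; 0; 2; 2; 2; 2; 0; 3; 1; 3; 1; 1; 1];
  [:: 2; 3; 5; 4; 1; 0; 0; 1; 2; 3; 5; 4; 0; 2; 2; 2; 2; 0; 3; 1; 3; 1; 1; 1];
  [:: 4; 3; 2; 5; 1; 0; 0; 1; 4; 5; 2; 3; 0; 2; 2; 2; 2; 0; 3; 1; 3; 1; 1; 1];
  [:: 4; 3; 2; 5; 1; 0; 0; 1; 4; 5; 3; 2; 0; 2; 2; 2; 2; 0; 3; 1; 3; 1; 1; 1];
  [:: 4; 3; 2; 5; 1; 0; 0; 1; 4; 2; 5; 3; 0; 2; 2; 2; 2; 0; 3; 1; 3; 1; 1; 1];
  [:: 4; 3; 2; 5; 1; 0; 0; 1; 4; 3; 5; 2; 0; 2; 2; 2; 2; 0; 3; 1; 3; 1; 1; 1];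
  [:: 4; 3; 2; 5; 1; 0; 0; 1; 4; 2; 3; 5; 0; 2; 2; 2; 2; 0; 3; 1; 3; 1; 1; 1];
  [:: 4; 3; 2; 5; 1; 0; 0; 1; 4; 3; 2; 5; 0; 2; 2; 2; 2; 0; 3; 1; 3; 1; 1; 1];
  [:: 3; 2; 5; 4; 1; 0; 0; 1; 2; 4; 5; 3; 0; 0; 2; 2; 1; 0; 3; 1; 3; 1; 1; 3];
  [:: 3; 2; 5; 4; 1; 0; 0; 1; 2; 5; 4; 3; 0; 0; 2; 2; 1; 0; 3; 1; 3; 1; 1; 3];
  [:: 3; 2; 5; 4; 1; 0; 0; 1; 2; 4; 5; 3; 0; 0; 2; 2; 2; 0; 3; 1; 3; 1; 1; 3];
  [:: 3; 2; 5; 4; 1; 0; 0; 1; 2; 5; 4; 3; 0; 0; 2; 2; 2; 0; 3; 1; 3; 1; 1; 3];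
  [:: 5; 2; 3; 4; 1; 0; 0; 1; 2; 4; 3; 5; 0; 0; 2; 2; 2; 0; 3; 1; 3; 1; 1; 3];
  [:: 4; 2; 3; 5; 1; 0; 0; 1; 2; 5; 3; 4; 0; 0; 2; 2; 2; 0; 3; 1; 3; 1; 1; 3];
  [:: 5; 2; 3; 4; 1; 0; 0; 1; 2; 3; 4; 5; 0; 0; 2; 2; 2; 0; 3; 1; 3; 1; 1; 3];
  [:: 4; 2; 3; 5; 1; 0; 0; 1; 2; 3; 5; 4; 0; 0; 2; 2; 2; 0; 3; 1; 3; 1; 1; 3];
  [:: 4; 3; 2; 5; 1; 0; 0; 1; 4; 5; 2; 3; 0; 0; 2; 2; 2; 0; 3; 1; 3; 1; 1; 3];
  [:: 4; 2; 3; 5; 1; 0; 0; 1; 4; 5; 3; 2; 0; 0; 2; 2; 2; 0; 3; 1; 3; 1; 1; 3];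
  [:: 4; 3; 2; 5; 1; 0; 0; 1; 4; 2; 5; 3; 0; 0; 2; 2; 2; 0; 3; 1; 3; 1; 1; 3];
  [:: 4; 2; 3; 5; 1; 0; 0; 1; 4; 3; 5; 2; 0; 0; 2; 2; 2; 0; 3; 1; 3; 1; 1; 3];
  [:: 5; 4; 3; 2; 1; 0; 0; 1; 4; 2; 3; 5; 0; 0; 2; 2; 2; 0; 3; 1; 3; 1; 1; 3];
  [:: 5; 4; 3; 2; 1; 0; 0; 1; 4; 3; 2; 5; 0; 0; 2; 2; 2; 0; 3; 1; 3; 1; 1; 3];
  [:: 0; 5; 1; 2; 3; 4; 0; 1; 4; 5; 2; 3; 0; 1; 3; 3; 2; 2; 2; 1; 0; 3; 1; 0];
  [:: 1; 4; 0; 2; 3; 5; 0; 1; 4; 5; 2; 3; 0; 0; 1; 2; 1; 1; 3; 2; 2; 3; 0; 3];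
  [:: 0; 5; 1; 2; 3; 4; 0; 1; 2; 5; 4; 3; 0; 1; 3; 3; 2; 2; 2; 1; 1; 3; 0; 0];
  [:: 1; 4; 0; 2; 3; 5; 0; 1; 2; 5; 4; 3; 0; 0; 1; 2; 1; 1; 3; 2; 0; 3; 2; 3];
  [:: 5; 2; 3; 4; 1; 0; 0; 1; 2; 3; 5; 4; 0; 0; 2; 2; 2; 0; 3; 1; 3; 1; 3; 0];
  [:: 4; 5; 2; 3; 1; 0; 0; 1; 2; 3; 5; 4; 0; 0; 0; 2; 2; 0; 3; 1; 3; 1; 3; 0];
  [:: 4; 3; 2; 5; 1; 0; 0; 1; 4; 2; 3; 5; 0; 0; 2; 2; 2; 0; 3; 1; 3; 1; 3; 0];
  [:: 5; 4; 3; 2; 1; 0; 0; 1; 4; 2; 3; 5; 0; 0; 0; 2; 2; 0; 3; 1; 3; 1; 3; 0];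
  [:: 3; 2; 5; 4; 1; 0; 0; 1; 2; 4; 3; 5; 0; 0; 2; 2; 1; 0; 3; 1; 3; 1; 3; 1];
  [:: 3; 2; 5; 4; 1; 0; 0; 1; 2; 5; 3; 4; 0; 0; 2; 2; 1; 0; 3; 1; 3; 1; 3; 1];
  [:: 3; 2; 5; 4; 1; 0; 0; 1; 2; 4; 3; 5; 0; 0; 2; 2; 2; 0; 3; 1; 3; 1; 3; 1];
  [:: 3; 2; 5; 4; 1; 0; 0; 1; 2; 5; 3; 4; 0; 0; 2; 2; 2; 0; 3; 1; 3; 1; 3; 1];
  [:: 5; 2; 3; 4; 1; 0; 0; 1; 2; 4; 5; 3; 0; 0; 2; 2; 2; 0; 3; 1; 3; 1; 3; 1];
  [:: 4; 2; 3; 5; 1; 0; 0; 1; 2; 5; 4; 3; 0; 0; 2; 2; 2; 0; 3; 1; 3; 1; 3; 1];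
  [:: 5; 2; 3; 4; 1; 0; 0; 1; 2; 3; 5; 4; 0; 0; 2; 2; 2; 0; 3; 1; 3; 1; 3; 1];
  [:: 4; 2; 3; 5; 1; 0; 0; 1; 2; 3; 4; 5; 0; 0; 2; 2; 2; 0; 3; 1; 3; 1; 3; 1];
  [:: 4; 3; 2; 5; 1; 0; 0; 1; 4; 5; 3; 2; 0; 0; 2; 2; 2; 0; 3; 1; 3; 1; 3; 1];
  [:: 4; 2; 3; 5; 1; 0; 0; 1; 4; 5; 2; 3; 0; 0; 2; 2; 2; 0; 3; 1; 3; 1; 3; 1];
  [:: 4; 3; 2; 5; 1; 0; 0; 1; 4; 2; 3; 5; 0; 0; 2; 2; 2; 0; 3; 1; 3; 1; 3; 1];
  [:: 4; 2; 3; 5; 1; 0; 0; 1; 4; 3; 2; 5; 0; 0; 2; 2; 2; 0; 3; 1; 3; 1; 3; 1];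
  [:: 5; 4; 3; 2; 1; 0; 0; 1; 4; 2; 5; 3; 0; 0; 2; 2; 2; 0; 3; 1; 3; 1; 3; 1];
  [:: 5; 4; 3; 2; 1; 0; 0; 1; 4; 3; 5; 2; 0; 0; 2; 2; 2; 0; 3; 1; 3; 1; 3; 1];
  [:: 5; 3; 2; 4; 1; 0; 0; 1; 2; 4; 3; 5; 0; 0; 0; 2; 2; 0; 3; 1; 3; 1; 3; 3];
  [:: 4; 3; 2; 5; 1; 0; 0; 1; 2; 5; 3; 4; 0; 0; 0; 2; 2; 0; 3; 1; 3; 1; 3; 3];
  [:: 5; 3; 2; 4; 1; 0; 0; 1; 2; 4; 5; 3; 0; 0; 0; 2; 2; 0; 3; 1; 3; 1; 3; 3];
  [:: 4; 3; 2; 5; 1; 0; 0; 1; 2; 5; 4; 3; 0; 0; 0; 2; 2; 0; 3; 1; 3; 1; 3; 3];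
  [:: 4; 5; 2; 3; 1; 0; 0; 1; 2; 3; 5; 4; 0; 0; 0; 2; 2; 0; 3; 1; 3; 1; 3; 3];
  [:: 4; 5; 2; 3; 1; 0; 0; 1; 2; 3; 4; 5; 0; 0; 0; 2; 2; 0; 3; 1; 3; 1; 3; 3];
  [:: 4; 2; 3; 5; 1; 0; 0; 1; 4; 5; 3; 2; 0; 0; 0; 2; 2; 0; 3; 1; 3; 1; 3; 3];
  [:: 4; 2; 3; 5; 1; 0; 0; 1; 4; 5; 2; 3; 0; 0; 0; 2; 2; 0; 3; 1; 3; 1; 3; 3];
  [:: 5; 4; 3; 2; 1; 0; 0; 1; 4; 2; 3; 5; 0; 0; 0; 2; 2; 0; 3; 1; 3; 1; 3; 3];
  [:: 5; 4; 2; 3; 1; 0; 0; 1; 4; 3; 2; 5; 0; 0; 0; 2; 2; 0; 3; 1; 3; 1; 3; 3];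
  [:: 5; 4; 3; 2; 1; 0; 0; 1; 4; 2; 5; 3; 0; 0; 0; 2; 2; 0; 3; 1; 3; 1; 3; 3];
  [:: 5; 4; 2; 3; 1; 0; 0; 1; 4; 3; 5; 2; 0; 0; 0; 2; 2; 0; 3; 1; 3; 1; 3; 3];
  [:: 0; 5; 1; 2; 3; 4; 0; 1; 4; 2; 3; 5; 0; 1; 3; 3; 2; 2; 2; 1; 0; 1; 0; 3];
  [:: 0; 5; 1; 2; 3; 4; 0; 1; 2; 4; 3; 5; 0; 1; 3; 3; 2; 2; 2; 1; 1; 0; 0; 3];
  [:: 1; 4; 0; 2; 3; 5; 0; 1; 4; 2; 3; 5; 0; 0; 1; 2; 1; 1; 3; 2; 2; 0; 3; 3];
  [:: 1; 4; 0; 2; 3; 5; 0; 1; 2; 4; 3; 5; 0; 0; 1; 2; 1; 1; 3; 2; 0; 2; 3; 3];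
  [:: 5; 2; 3; 4; 1; 0; 0; 1; 2; 5; 4; 3; 0; 0; 2; 2; 2; 0; 3; 1; 3; 3; 0; 1];
  [:: 4; 5; 2; 3; 1; 0; 0; 1; 2; 5; 4; 3; 0; 0; 0; 2; 2; 0; 3; 1; 3; 3; 0; 1];
  [:: 4; 3; 2; 5; 1; 0; 0; 1; 4; 3; 5; 2; 0; 0; 2; 2; 2; 0; 3; 1; 3; 3; 0; 1];
  [:: 5; 4; 3; 2; 1; 0; 0; 1; 4; 3; 5; 2; 0; 0; 0; 2; 2; 0; 3; 1; 3; 3; 0; 1];
  [:: 0; 1; 3; 4; 5; 2; 0; 1; 2; 3; 5; 4; 0; 1; 1; 3; 2; 2; 2; 3; 0; 3; 0; 1];
  [:: 0; 1; 3; 4; 5; 2; 0; 1; 2; 4; 5; 3; 0; 1; 1; 3; 2; 2; 2; 3; 0; 1; 0; 3];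
  [:: 0; 1; 2; 5; 4; 3; 0; 1; 2; 3; 4; 5; 0; 1; 1; 3; 2; 2; 2; 3; 3; 0; 0; 1];
  [:: 0; 1; 2; 5; 4; 3; 0; 1; 2; 5; 4; 3; 0; 1; 1; 3; 2; 2; 2; 3; 3; 1; 0; 0];
  [:: 0; 1; 3; 4; 5; 2; 0; 1; 4; 2; 5; 3; 0; 1; 1; 3; 2; 2; 2; 3; 1; 0; 0; 3];
  [:: 0; 1; 3; 4; 5; 2; 0; 1; 4; 3; 5; 2; 0; 1; 1; 3; 2; 2; 2; 3; 1; 3; 0; 0];
  [:: 0; 5; 1; 2; 3; 4; 0; 1; 4; 2; 5; 3; 0; 1; 3; 3; 2; 2; 2; 1; 0; 1; 3; 0];
  [:: 0; 5; 1; 2; 3; 4; 0; 1; 2; 4; 5; 3; 0; 1; 3; 3; 2; 2; 2; 1; 1; 0; 3; 0];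
  [:: 1; 4; 0; 2; 3; 5; 0; 1; 4; 2; 5; 3; 0; 0; 1; 2; 1; 1; 3; 2; 2; 0; 3; 3];
  [:: 1; 4; 0; 2; 3; 5; 0; 1; 2; 4; 5; 3; 0; 0; 1; 2; 1; 1; 3; 2; 0; 2; 3; 3];
  [:: 5; 2; 3; 4; 1; 0; 0; 1; 2; 5; 3; 4; 0; 0; 2; 2; 2; 0; 3; 1; 3; 3; 1; 0];
  [:: 4; 5; 2; 3; 1; 0; 0; 1; 2; 5; 3; 4; 0; 0; 0; 2; 2; 0; 3; 1; 3; 3; 1; 0];
  [:: 4; 3; 2; 5; 1; 0; 0; 1; 4; 3; 2; 5; 0; 0; 2; 2; 2; 0; 3; 1; 3; 3; 1; 0];
  [:: 5; 4; 3; 2; 1; 0; 0; 1; 4; 3; 2; 5; 0; 0; 0; 2; 2; 0; 3; 1; 3; 3; 1; 0];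
  [:: 3; 2; 5; 4; 1; 0; 0; 1; 2; 3; 4; 5; 0; 0; 2; 2; 1; 0; 3; 1; 3; 3; 1; 1];
  [:: 3; 2; 5; 4; 1; 0; 0; 1; 2; 3; 5; 4; 0; 0; 2; 2; 1; 0; 3; 1; 3; 3; 1; 1];
  [:: 3; 2; 5; 4; 1; 0; 0; 1; 2; 3; 4; 5; 0; 0; 2; 2; 2; 0; 3; 1; 3; 3; 1; 1];
  [:: 3; 2; 5; 4; 1; 0; 0; 1; 2; 3; 5; 4; 0; 0; 2; 2; 2; 0; 3; 1; 3; 3; 1; 1];
  [:: 5; 2; 3; 4; 1; 0; 0; 1; 2; 5; 4; 3; 0; 0; 2; 2; 2; 0; 3; 1; 3; 3; 1; 1];
  [:: 4; 2; 3; 5; 1; 0; 0; 1; 2; 4; 5; 3; 0; 0; 2; 2; 2; 0; 3; 1; 3; 3; 1; 1];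
  [:: 5; 2; 3; 4; 1; 0; 0; 1; 2; 5; 3; 4; 0; 0; 2; 2; 2; 0; 3; 1; 3; 3; 1; 1];
  [:: 4; 2; 3; 5; 1; 0; 0; 1; 2; 4; 3; 5; 0; 0; 2; 2; 2; 0; 3; 1; 3; 3; 1; 1];
  [:: 4; 3; 2; 5; 1; 0; 0; 1; 4; 3; 5; 2; 0; 0; 2; 2; 2; 0; 3; 1; 3; 3; 1; 1];
  [:: 4; 2; 3; 5; 1; 0; 0; 1; 4; 2; 5; 3; 0; 0; 2; 2; 2; 0; 3; 1; 3; 3; 1; 1];
  [:: 4; 3; 2; 5; 1; 0; 0; 1; 4; 3; 2; 5; 0; 0; 2; 2; 2; 0; 3; 1; 3; 3; 1; 1];
  [:: 4; 2; 3; 5; 1; 0; 0; 1; 4; 2; 3; 5; 0; 0; 2; 2; 2; 0; 3; 1; 3; 3; 1; 1];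
  [:: 5; 4; 3; 2; 1; 0; 0; 1; 4; 5; 2; 3; 0; 0; 2; 2; 2; 0; 3; 1; 3; 3; 1; 1];
  [:: 5; 4; 3; 2; 1; 0; 0; 1; 4; 5; 3; 2; 0; 0; 2; 2; 2; 0; 3; 1; 3; 3; 1; 1];
  [:: 5; 3; 2; 4; 1; 0; 0; 1; 2; 3; 4; 5; 0; 0; 0; 2; 2; 0; 3; 1; 3; 3; 1; 3];
  [:: 4; 3; 2; 5; 1; 0; 0; 1; 2; 3; 5; 4; 0; 0; 0; 2; 2; 0; 3; 1; 3; 3; 1; 3];
  [:: 5; 3; 2; 4; 1; 0; 0; 1; 2; 5; 4; 3; 0; 0; 0; 2; 2; 0; 3; 1; 3; 3; 1; 3];
  [:: 4; 3; 2; 5; 1; 0; 0; 1; 2; 4; 5; 3; 0; 0; 0; 2; 2; 0; 3; 1; 3; 3; 1; 3];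
  [:: 4; 5; 2; 3; 1; 0; 0; 1; 2; 5; 3; 4; 0; 0; 0; 2; 2; 0; 3; 1; 3; 3; 1; 3];
  [:: 4; 5; 2; 3; 1; 0; 0; 1; 2; 4; 3; 5; 0; 0; 0; 2; 2; 0; 3; 1; 3; 3; 1; 3];
  [:: 4; 2; 3; 5; 1; 0; 0; 1; 4; 3; 5; 2; 0; 0; 0; 2; 2; 0; 3; 1; 3; 3; 1; 3];
  [:: 4; 2; 3; 5; 1; 0; 0; 1; 4; 2; 5; 3; 0; 0; 0; 2; 2; 0; 3; 1; 3; 3; 1; 3];
  [:: 5; 4; 3; 2; 1; 0; 0; 1; 4; 3; 2; 5; 0; 0; 0; 2; 2; 0; 3; 1; 3; 3; 1; 3];
  [:: 5; 4; 2; 3; 1; 0; 0; 1; 4; 2; 3; 5; 0; 0; 0; 2; 2; 0; 3; 1; 3; 3; 1; 3];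
  [:: 5; 4; 3; 2; 1; 0; 0; 1; 4; 5; 2; 3; 0; 0; 0; 2; 2; 0; 3; 1; 3; 3; 1; 3];
  [:: 5; 4; 2; 3; 1; 0; 0; 1; 4; 5; 3; 2; 0; 0; 0; 2; 2; 0; 3; 1; 3; 3; 1; 3];
  [:: 0; 1; 3; 4; 5; 2; 0; 1; 2; 3; 4; 5; 0; 1; 1; 3; 2; 2; 2; 3; 0; 3; 1; 0];
  [:: 0; 1; 3; 4; 5; 2; 0; 1; 2; 4; 3; 5; 0; 1; 1; 3; 2; 2; 2; 3; 0; 1; 3; 0];
  [:: 0; 1; 2; 5; 4; 3; 0; 1; 2; 3; 5; 4; 0; 1; 1; 3; 2; 2; 2; 3; 3; 0; 1; 0];
  [:: 0; 1; 2; 5; 4; 3; 0; 1; 2; 5; 3; 4; 0; 1; 1; 3; 2; 2; 2; 3; 3; 1; 0; 0];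
  [:: 0; 1; 3; 4; 5; 2; 0; 1; 4; 2; 3; 5; 0; 1; 1; 3; 2; 2; 2; 3; 1; 0; 3; 0];
  [:: 0; 1; 3; 4; 5; 2; 0; 1; 4; 3; 2; 5; 0; 1; 1; 3; 2; 2; 2; 3; 1; 3; 0; 0];
  [:: 5; 3; 2; 4; 1; 0; 0; 1; 2; 3; 5; 4; 0; 0; 0; 2; 2; 0; 3; 1; 3; 3; 3; 1];
  [:: 4; 3; 2; 5; 1; 0; 0; 1; 2; 3; 4; 5; 0; 0; 0; 2; 2; 0; 3; 1; 3; 3; 3; 1];
  [:: 5; 3; 2; 4; 1; 0; 0; 1; 2; 5; 3; 4; 0; 0; 0; 2; 2; 0; 3; 1; 3; 3; 3; 1];
  [:: 4; 3; 2; 5; 1; 0; 0; 1; 2; 4; 3; 5; 0; 0; 0; 2; 2; 0; 3; 1; 3; 3; 3; 1];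
  [:: 4; 5; 2; 3; 1; 0; 0; 1; 2; 5; 4; 3; 0; 0; 0; 2; 2; 0; 3; 1; 3; 3; 3; 1];
  [:: 4; 5; 2; 3; 1; 0; 0; 1; 2; 4; 5; 3; 0; 0; 0; 2; 2; 0; 3; 1; 3; 3; 3; 1];
  [:: 4; 2; 3; 5; 1; 0; 0; 1; 4; 3; 2; 5; 0; 0; 0; 2; 2; 0; 3; 1; 3; 3; 3; 1];
  [:: 4; 2; 3; 5; 1; 0; 0; 1; 4; 2; 3; 5; 0; 0; 0; 2; 2; 0; 3; 1; 3; 3; 3; 1];
  [:: 5; 4; 3; 2; 1; 0; 0; 1; 4; 3; 5; 2; 0; 0; 0; 2; 2; 0; 3; 1; 3; 3; 3; 1];
  [:: 5; 4; 2; 3; 1; 0; 0; 1; 4; 2; 5; 3; 0; 0; 0; 2; 2; 0; 3; 1; 3; 3; 3; 1];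
  [:: 5; 4; 3; 2; 1; 0; 0; 1; 4; 5; 3; 2; 0; 0; 0; 2; 2; 0; 3; 1; 3; 3; 3; 1];
  [:: 5; 4; 2; 3; 1; 0; 0; 1; 4; 5; 2; 3; 0; 0; 0; 2; 2; 0; 3; 1; 3; 3; 3; 1];
  [:: 4; 5; 3; 2; 1; 0; 0; 1; 2; 3; 5; 4; 0; 0; 0; 0; 2; 0; 3; 1; 3; 3; 3; 3];
  [:: 4; 5; 3; 2; 1; 0; 0; 1; 2; 3; 4; 5; 0; 0; 0; 0; 2; 0; 3; 1; 3; 3; 3; 3];
  [:: 4; 5; 3; 2; 1; 0; 0; 1; 2; 5; 3; 4; 0; 0; 0; 0; 2; 0; 3; 1; 3; 3; 3; 3];
  [:: 4; 5; 3; 2; 1; 0; 0; 1; 2; 4; 3; 5; 0; 0; 0; 0; 2; 0; 3; 1; 3; 3; 3; 3];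
  [:: 4; 5; 3; 2; 1; 0; 0; 1; 2; 5; 4; 3; 0; 0; 0; 0; 2; 0; 3; 1; 3; 3; 3; 3];
  [:: 4; 5; 3; 2; 1; 0; 0; 1; 2; 4; 5; 3; 0; 0; 0; 0; 2; 0; 3; 1; 3; 3; 3; 3];
  [:: 5; 4; 2; 3; 1; 0; 0; 1; 4; 3; 2; 5; 0; 0; 0; 0; 2; 0; 3; 1; 3; 3; 3; 3];
  [:: 5; 4; 2; 3; 1; 0; 0; 1; 4; 2; 3; 5; 0; 0; 0; 0; 2; 0; 3; 1; 3; 3; 3; 3];
  [:: 5; 4; 2; 3; 1; 0; 0; 1; 4; 3; 5; 2; 0; 0; 0; 0; 2; 0; 3; 1; 3; 3; 3; 3];
  [:: 5; 4; 2; 3; 1; 0; 0; 1; 4; 2; 5; 3; 0; 0; 0; 0; 2; 0; 3; 1; 3; 3; 3; 3];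
  [:: 5; 4; 2; 3; 1; 0; 0; 1; 4; 5; 3; 2; 0; 0; 0; 0; 2; 0; 3; 1; 3; 3; 3; 3];
  [:: 5; 4; 2; 3; 1; 0; 0; 1; 4; 5; 2; 3; 0; 0; 0; 0; 2; 0; 3; 1; 3; 3; 3; 3];
  [:: 2; 3; 1; 0; 4; 5; 0; 1; 4; 5; 2; 3; 0; 0; 2; 1; 1; 1; 3; 0; 3; 3; 2; 2];
  [:: 2; 3; 1; 0; 4; 5; 0; 1; 4; 2; 5; 3; 0; 0; 2; 1; 1; 1; 3; 0; 3; 2; 3; 2];
  [:: 4; 1; 5; 2; 3; 0; 0; 1; 2; 3; 5; 4; 0; 0; 2; 2; 2; 0; 3; 3; 0; 1; 1; 3];
  [:: 2; 4; 1; 5; 3; 0; 0; 1; 2; 3; 5; 4; 0; 0; 0; 2; 2; 0; 3; 3; 0; 1; 1; 3];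
  [:: 4; 1; 5; 2; 3; 0; 0; 1; 2; 5; 3; 4; 0; 0; 2; 2; 2; 0; 3; 3; 0; 1; 1; 3];
  [:: 2; 4; 1; 5; 3; 0; 0; 1; 2; 5; 3; 4; 0; 0; 0; 2; 2; 0; 3; 3; 0; 1; 1; 3];
  [:: 2; 3; 1; 0; 4; 5; 0; 1; 4; 5; 3; 2; 0; 0; 2; 1; 1; 1; 3; 0; 3; 3; 2; 2];
  [:: 2; 3; 1; 0; 4; 5; 0; 1; 4; 2; 3; 5; 0; 0; 2; 1; 1; 1; 3; 0; 3; 2; 2; 3];
  [:: 4; 1; 5; 2; 3; 0; 0; 1; 2; 3; 4; 5; 0; 0; 2; 2; 2; 0; 3; 3; 0; 1; 3; 1];
  [:: 2; 4; 1; 5; 3; 0; 0; 1; 2; 3; 4; 5; 0; 0; 0; 2; 2; 0; 3; 3; 0; 1; 3; 1];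
  [:: 4; 1; 5; 2; 3; 0; 0; 1; 2; 5; 4; 3; 0; 0; 2; 2; 2; 0; 3; 3; 0; 1; 3; 1];
  [:: 2; 4; 1; 5; 3; 0; 0; 1; 2; 5; 4; 3; 0; 0; 0; 2; 2; 0; 3; 3; 0; 1; 3; 1];
  [:: 0; 5; 4; 1; 2; 3; 0; 1; 2; 5; 3; 4; 0; 1; 1; 3; 2; 2; 2; 1; 0; 3; 0; 3];
  [:: 0; 5; 4; 1; 2; 3; 0; 1; 2; 5; 4; 3; 0; 1; 1; 3; 2; 2; 2; 1; 0; 3; 3; 0];
  [:: 2; 3; 1; 0; 4; 5; 0; 1; 4; 3; 5; 2; 0; 0; 2; 1; 1; 1; 3; 0; 3; 2; 3; 2];
  [:: 2; 3; 1; 0; 4; 5; 0; 1; 4; 3; 2; 5; 0; 0; 2; 1; 1; 1; 3; 0; 3; 2; 2; 3];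
  [:: 4; 1; 5; 2; 3; 0; 0; 1; 2; 4; 3; 5; 0; 0; 2; 2; 2; 0; 3; 3; 0; 3; 1; 1];
  [:: 2; 4; 1; 5; 3; 0; 0; 1; 2; 4; 3; 5; 0; 0; 0; 2; 2; 0; 3; 3; 0; 3; 1; 1];
  [:: 4; 1; 5; 2; 3; 0; 0; 1; 2; 4; 5; 3; 0; 0; 2; 2; 2; 0; 3; 3; 0; 3; 1; 1];
  [:: 2; 4; 1; 5; 3; 0; 0; 1; 2; 4; 5; 3; 0; 0; 0; 2; 2; 0; 3; 3; 0; 3; 1; 1];
  [:: 0; 5; 4; 1; 2; 3; 0; 1; 2; 3; 5; 4; 0; 1; 1; 3; 2; 2; 2; 1; 0; 0; 3; 3];
  [:: 0; 5; 4; 1; 2; 3; 0; 1; 2; 4; 5; 3; 0; 1; 1; 3; 2; 2; 2; 1; 0; 3; 3; 0];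
  [:: 0; 5; 4; 1; 2; 3; 0; 1; 2; 3; 4; 5; 0; 1; 1; 3; 2; 2; 2; 1; 0; 0; 3; 3];
  [:: 0; 5; 4; 1; 2; 3; 0; 1; 2; 4; 3; 5; 0; 1; 1; 3; 2; 2; 2; 1; 0; 3; 0; 3];
  [:: 2; 3; 1; 0; 4; 5; 0; 1; 2; 4; 5; 3; 0; 0; 2; 1; 1; 1; 3; 0; 2; 3; 3; 2];
  [:: 5; 1; 4; 3; 2; 0; 0; 1; 2; 3; 4; 5; 0; 0; 2; 2; 2; 0; 3; 3; 1; 0; 1; 3];
  [:: 3; 5; 1; 4; 2; 0; 0; 1; 2; 3; 4; 5; 0; 0; 0; 2; 2; 0; 3; 3; 1; 0; 1; 3];
  [:: 5; 1; 4; 2; 3; 0; 0; 1; 4; 3; 2; 5; 0; 0; 2; 2; 2; 0; 3; 3; 1; 0; 1; 3];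
  [:: 3; 5; 1; 4; 2; 0; 0; 1; 4; 3; 2; 5; 0; 0; 0; 2; 2; 0; 3; 3; 1; 0; 1; 3];
  [:: 2; 3; 1; 0; 4; 5; 0; 1; 2; 4; 3; 5; 0; 0; 2; 1; 1; 1; 3; 0; 2; 3; 2; 3];
  [:: 5; 1; 4; 3; 2; 0; 0; 1; 2; 3; 5; 4; 0; 0; 2; 2; 2; 0; 3; 3; 1; 0; 3; 1];
  [:: 3; 5; 1; 4; 2; 0; 0; 1; 2; 3; 5; 4; 0; 0; 0; 2; 2; 0; 3; 3; 1; 0; 3; 1];
  [:: 5; 1; 4; 2; 3; 0; 0; 1; 4; 3; 5; 2; 0; 0; 2; 2; 2; 0; 3; 3; 1; 0; 3; 1];
  [:: 3; 5; 1; 4; 2; 0; 0; 1; 4; 3; 5; 2; 0; 0; 0; 2; 2; 0; 3; 3; 1; 0; 3; 1];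
  [:: 0; 4; 5; 1; 3; 2; 0; 1; 4; 3; 2; 5; 0; 1; 1; 3; 2; 2; 2; 1; 3; 0; 0; 3];
  [:: 0; 4; 5; 1; 3; 2; 0; 1; 4; 3; 5; 2; 0; 1; 1; 3; 2; 2; 2; 1; 3; 0; 3; 0];
  [:: 2; 3; 1; 0; 4; 5; 0; 1; 2; 5; 4; 3; 0; 0; 2; 1; 1; 1; 3; 0; 2; 3; 3; 2];
  [:: 5; 1; 4; 3; 2; 0; 0; 1; 2; 4; 3; 5; 0; 0; 2; 2; 2; 0; 3; 3; 1; 1; 0; 3];
  [:: 3; 5; 1; 4; 2; 0; 0; 1; 2; 4; 3; 5; 0; 0; 0; 2; 2; 0; 3; 3; 1; 1; 0; 3];
  [:: 5; 1; 4; 2; 3; 0; 0; 1; 4; 2; 3; 5; 0; 0; 2; 2; 2; 0; 3; 3; 1; 1; 0; 3];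
  [:: 3; 5; 1; 4; 2; 0; 0; 1; 4; 2; 3; 5; 0; 0; 0; 2; 2; 0; 3; 3; 1; 1; 0; 3];
  [:: 1; 4; 5; 3; 2; 0; 0; 1; 2; 3; 5; 4; 0; 2; 2; 2; 2; 0; 3; 3; 1; 1; 1; 1];
  [:: 1; 4; 5; 3; 2; 0; 0; 1; 2; 5; 3; 4; 0; 2; 2; 2; 2; 0; 3; 3; 1; 1; 1; 1];
  [:: 1; 4; 5; 3; 2; 0; 0; 1; 2; 3; 4; 5; 0; 2; 2; 2; 2; 0; 3; 3; 1; 1; 1; 1];
  [:: 1; 4; 5; 3; 2; 0; 0; 1; 2; 5; 4; 3; 0; 2; 2; 2; 2; 0; 3; 3; 1; 1; 1; 1];
  [:: 1; 4; 5; 3; 2; 0; 0; 1; 2; 4; 3; 5; 0; 2; 2; 2; 2; 0; 3; 3; 1; 1; 1; 1];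
  [:: 1; 4; 5; 3; 2; 0; 0; 1; 2; 4; 5; 3; 0; 2; 2; 2; 2; 0; 3; 3; 1; 1; 1; 1];
  [:: 1; 5; 4; 2; 3; 0; 0; 1; 4; 3; 2; 5; 0; 2; 2; 2; 2; 0; 3; 3; 1; 1; 1; 1];
  [:: 1; 5; 4; 2; 3; 0; 0; 1; 4; 3; 5; 2; 0; 2; 2; 2; 2; 0; 3; 3; 1; 1; 1; 1];
  [:: 1; 5; 4; 2; 3; 0; 0; 1; 4; 2; 3; 5; 0; 2; 2; 2; 2; 0; 3; 3; 1; 1; 1; 1];
  [:: 1; 5; 4; 2; 3; 0; 0; 1; 4; 2; 5; 3; 0; 2; 2; 2; 2; 0; 3; 3; 1; 1; 1; 1];
  [:: 1; 5; 4; 2; 3; 0; 0; 1; 4; 5; 3; 2; 0; 2; 2; 2; 2; 0; 3; 3; 1; 1; 1; 1];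
  [:: 1; 5; 4; 2; 3; 0; 0; 1; 4; 5; 2; 3; 0; 2; 2; 2; 2; 0; 3; 3; 1; 1; 1; 1];
  [:: 4; 1; 5; 3; 2; 0; 0; 1; 2; 3; 5; 4; 0; 0; 2; 2; 2; 0; 3; 3; 1; 1; 1; 3];
  [:: 4; 1; 5; 3; 2; 0; 0; 1; 2; 5; 3; 4; 0; 0; 2; 2; 2; 0; 3; 3; 1; 1; 1; 3];
  [:: 5; 1; 4; 3; 2; 0; 0; 1; 2; 3; 4; 5; 0; 0; 2; 2; 2; 0; 3; 3; 1; 1; 1; 3];
  [:: 3; 1; 4; 5; 2; 0; 0; 1; 2; 5; 4; 3; 0; 0; 2; 2; 2; 0; 3; 3; 1; 1; 1; 3];
  [:: 5; 1; 4; 3; 2; 0; 0; 1; 2; 4; 3; 5; 0; 0; 2; 2; 2; 0; 3; 3; 1; 1; 1; 3];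
  [:: 3; 1; 4; 5; 2; 0; 0; 1; 2; 4; 5; 3; 0; 0; 2; 2; 2; 0; 3; 3; 1; 1; 1; 3];
  [:: 5; 1; 4; 2; 3; 0; 0; 1; 4; 3; 2; 5; 0; 0; 2; 2; 2; 0; 3; 3; 1; 1; 1; 3];
  [:: 2; 1; 5; 4; 3; 0; 0; 1; 4; 3; 5; 2; 0; 0; 2; 2; 2; 0; 3; 3; 1; 1; 1; 3];
  [:: 5; 1; 4; 2; 3; 0; 0; 1; 4; 2; 3; 5; 0; 0; 2; 2; 2; 0; 3; 3; 1; 1; 1; 3];
  [:: 2; 1; 5; 4; 3; 0; 0; 1; 4; 5; 3; 2; 0; 0; 2; 2; 2; 0; 3; 3; 1; 1; 1; 3];
  [:: 3; 1; 5; 4; 2; 0; 0; 1; 4; 2; 5; 3; 0; 0; 2; 2; 2; 0; 3; 3; 1; 1; 1; 3];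
  [:: 3; 1; 5; 4; 2; 0; 0; 1; 4; 5; 2; 3; 0; 0; 2; 2; 2; 0; 3; 3; 1; 1; 1; 3];
  [:: 2; 3; 1; 0; 4; 5; 0; 1; 2; 5; 3; 4; 0; 0; 2; 1; 1; 1; 3; 0; 2; 3; 2; 3];
  [:: 5; 1; 4; 3; 2; 0; 0; 1; 2; 4; 5; 3; 0; 0; 2; 2; 2; 0; 3; 3; 1; 1; 3; 0];
  [:: 3; 5; 1; 4; 2; 0; 0; 1; 2; 4; 5; 3; 0; 0; 0; 2; 2; 0; 3; 3; 1; 1; 3; 0];
  [:: 5; 1; 4; 2; 3; 0; 0; 1; 4; 2; 5; 3; 0; 0; 2; 2; 2; 0; 3; 3; 1; 1; 3; 0];
  [:: 3; 5; 1; 4; 2; 0; 0; 1; 4; 2; 5; 3; 0; 0; 0; 2; 2; 0; 3; 3; 1; 1; 3; 0];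
  [:: 4; 1; 5; 3; 2; 0; 0; 1; 2; 3; 4; 5; 0; 0; 2; 2; 2; 0; 3; 3; 1; 1; 3; 1];
  [:: 4; 1; 5; 3; 2; 0; 0; 1; 2; 5; 4; 3; 0; 0; 2; 2; 2; 0; 3; 3; 1; 1; 3; 1];
  [:: 5; 1; 4; 3; 2; 0; 0; 1; 2; 3; 5; 4; 0; 0; 2; 2; 2; 0; 3; 3; 1; 1; 3; 1];
  [:: 3; 1; 4; 5; 2; 0; 0; 1; 2; 5; 3; 4; 0; 0; 2; 2; 2; 0; 3; 3; 1; 1; 3; 1];
  [:: 5; 1; 4; 3; 2; 0; 0; 1; 2; 4; 5; 3; 0; 0; 2; 2; 2; 0; 3; 3; 1; 1; 3; 1];
  [:: 3; 1; 4; 5; 2; 0; 0; 1; 2; 4; 3; 5; 0; 0; 2; 2; 2; 0; 3; 3; 1; 1; 3; 1];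
  [:: 5; 1; 4; 2; 3; 0; 0; 1; 4; 3; 5; 2; 0; 0; 2; 2; 2; 0; 3; 3; 1; 1; 3; 1];
  [:: 2; 1; 5; 4; 3; 0; 0; 1; 4; 3; 2; 5; 0; 0; 2; 2; 2; 0; 3; 3; 1; 1; 3; 1];
  [:: 5; 1; 4; 2; 3; 0; 0; 1; 4; 2; 5; 3; 0; 0; 2; 2; 2; 0; 3; 3; 1; 1; 3; 1];
  [:: 2; 1; 5; 4; 3; 0; 0; 1; 4; 5; 2; 3; 0; 0; 2; 2; 2; 0; 3; 3; 1; 1; 3; 1];
  [:: 3; 1; 5; 4; 2; 0; 0; 1; 4; 2; 3; 5; 0; 0; 2; 2; 2; 0; 3; 3; 1; 1; 3; 1];
  [:: 3; 1; 5; 4; 2; 0; 0; 1; 4; 5; 3; 2; 0; 0; 2; 2; 2; 0; 3; 3; 1; 1; 3; 1];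
  [:: 5; 4; 1; 3; 2; 0; 0; 1; 2; 3; 4; 5; 0; 0; 0; 2; 2; 0; 3; 3; 1; 1; 3; 3];
  [:: 3; 4; 1; 5; 2; 0; 0; 1; 2; 5; 4; 3; 0; 0; 0; 2; 2; 0; 3; 3; 1; 1; 3; 3];
  [:: 5; 4; 1; 3; 2; 0; 0; 1; 2; 3; 5; 4; 0; 0; 0; 2; 2; 0; 3; 3; 1; 1; 3; 3];
  [:: 3; 4; 1; 5; 2; 0; 0; 1; 2; 5; 3; 4; 0; 0; 0; 2; 2; 0; 3; 3; 1; 1; 3; 3];
  [:: 3; 5; 1; 4; 2; 0; 0; 1; 2; 4; 5; 3; 0; 0; 0; 2; 2; 0; 3; 3; 1; 1; 3; 3];
  [:: 3; 5; 1; 4; 2; 0; 0; 1; 2; 4; 3; 5; 0; 0; 0; 2; 2; 0; 3; 3; 1; 1; 3; 3];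
  [:: 2; 5; 1; 4; 3; 0; 0; 1; 4; 3; 5; 2; 0; 0; 0; 2; 2; 0; 3; 3; 1; 1; 3; 3];
  [:: 2; 5; 1; 4; 3; 0; 0; 1; 4; 3; 2; 5; 0; 0; 0; 2; 2; 0; 3; 3; 1; 1; 3; 3];
  [:: 3; 5; 1; 4; 2; 0; 0; 1; 4; 2; 5; 3; 0; 0; 0; 2; 2; 0; 3; 3; 1; 1; 3; 3];
  [:: 3; 5; 1; 4; 2; 0; 0; 1; 4; 2; 3; 5; 0; 0; 0; 2; 2; 0; 3; 3; 1; 1; 3; 3];
  [:: 3; 2; 1; 5; 4; 0; 0; 1; 4; 5; 2; 3; 0; 0; 0; 2; 2; 0; 3; 3; 1; 1; 3; 3];
  [:: 3; 2; 1; 5; 4; 0; 0; 1; 4; 5; 3; 2; 0; 0; 0; 2; 2; 0; 3; 3; 1; 1; 3; 3];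
  [:: 2; 3; 1; 0; 4; 5; 0; 1; 2; 3; 4; 5; 0; 0; 2; 1; 1; 1; 3; 0; 2; 2; 3; 3];
  [:: 5; 1; 4; 3; 2; 0; 0; 1; 2; 5; 3; 4; 0; 0; 2; 2; 2; 0; 3; 3; 1; 3; 0; 1];
  [:: 3; 5; 1; 4; 2; 0; 0; 1; 2; 5; 3; 4; 0; 0; 0; 2; 2; 0; 3; 3; 1; 3; 0; 1];
  [:: 5; 1; 4; 2; 3; 0; 0; 1; 4; 5; 3; 2; 0; 0; 2; 2; 2; 0; 3; 3; 1; 3; 0; 1];
  [:: 3; 5; 1; 4; 2; 0; 0; 1; 4; 5; 3; 2; 0; 0; 0; 2; 2; 0; 3; 3; 1; 3; 0; 1];
  [:: 0; 4; 5; 1; 3; 2; 0; 1; 4; 2; 3; 5; 0; 1; 1; 3; 2; 2; 2; 1; 3; 0; 0; 3];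
  [:: 0; 4; 5; 1; 3; 2; 0; 1; 4; 5; 3; 2; 0; 1; 1; 3; 2; 2; 2; 1; 3; 3; 0; 0];
  [:: 2; 3; 1; 0; 4; 5; 0; 1; 2; 3; 5; 4; 0; 0; 2; 1; 1; 1; 3; 0; 2; 2; 3; 3];
  [:: 5; 1; 4; 3; 2; 0; 0; 1; 2; 5; 4; 3; 0; 0; 2; 2; 2; 0; 3; 3; 1; 3; 1; 0];
  [:: 3; 5; 1; 4; 2; 0; 0; 1; 2; 5; 4; 3; 0; 0; 0; 2; 2; 0; 3; 3; 1; 3; 1; 0];
  [:: 5; 1; 4; 2; 3; 0; 0; 1; 4; 5; 2; 3; 0; 0; 2; 2; 2; 0; 3; 3; 1; 3; 1; 0];
  [:: 3; 5; 1; 4; 2; 0; 0; 1; 4; 5; 2; 3; 0; 0; 0; 2; 2; 0; 3; 3; 1; 3; 1; 0];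
  [:: 4; 1; 5; 3; 2; 0; 0; 1; 2; 4; 3; 5; 0; 0; 2; 2; 2; 0; 3; 3; 1; 3; 1; 1];
  [:: 4; 1; 5; 3; 2; 0; 0; 1; 2; 4; 5; 3; 0; 0; 2; 2; 2; 0; 3; 3; 1; 3; 1; 1];
  [:: 5; 1; 4; 3; 2; 0; 0; 1; 2; 5; 3; 4; 0; 0; 2; 2; 2; 0; 3; 3; 1; 3; 1; 1];
  [:: 3; 1; 4; 5; 2; 0; 0; 1; 2; 3; 5; 4; 0; 0; 2; 2; 2; 0; 3; 3; 1; 3; 1; 1];
  [:: 5; 1; 4; 3; 2; 0; 0; 1; 2; 5; 4; 3; 0; 0; 2; 2; 2; 0; 3; 3; 1; 3; 1; 1];
  [:: 3; 1; 4; 5; 2; 0; 0; 1; 2; 3; 4; 5; 0; 0; 2; 2; 2; 0; 3; 3; 1; 3; 1; 1];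
  [:: 5; 1; 4; 2; 3; 0; 0; 1; 4; 5; 3; 2; 0; 0; 2; 2; 2; 0; 3; 3; 1; 3; 1; 1];
  [:: 5; 1; 4; 2; 3; 0; 0; 1; 4; 5; 2; 3; 0; 0; 2; 2; 2; 0; 3; 3; 1; 3; 1; 1];
  [:: 2; 1; 5; 4; 3; 0; 0; 1; 4; 2; 3; 5; 0; 0; 2; 2; 2; 0; 3; 3; 1; 3; 1; 1];
  [:: 2; 1; 5; 4; 3; 0; 0; 1; 4; 2; 5; 3; 0; 0; 2; 2; 2; 0; 3; 3; 1; 3; 1; 1];
  [:: 3; 1; 5; 4; 2; 0; 0; 1; 4; 3; 2; 5; 0; 0; 2; 2; 2; 0; 3; 3; 1; 3; 1; 1];
  [:: 3; 1; 5; 4; 2; 0; 0; 1; 4; 3; 5; 2; 0; 0; 2; 2; 2; 0; 3; 3; 1; 3; 1; 1];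
  [:: 5; 4; 1; 3; 2; 0; 0; 1; 2; 4; 3; 5; 0; 0; 0; 2; 2; 0; 3; 3; 1; 3; 1; 3];
  [:: 3; 4; 1; 5; 2; 0; 0; 1; 2; 4; 5; 3; 0; 0; 0; 2; 2; 0; 3; 3; 1; 3; 1; 3];
  [:: 5; 4; 1; 3; 2; 0; 0; 1; 2; 5; 3; 4; 0; 0; 0; 2; 2; 0; 3; 3; 1; 3; 1; 3];
  [:: 3; 4; 1; 5; 2; 0; 0; 1; 2; 3; 5; 4; 0; 0; 0; 2; 2; 0; 3; 3; 1; 3; 1; 3];
  [:: 3; 5; 1; 4; 2; 0; 0; 1; 2; 5; 4; 3; 0; 0; 0; 2; 2; 0; 3; 3; 1; 3; 1; 3];
  [:: 3; 5; 1; 4; 2; 0; 0; 1; 2; 3; 4; 5; 0; 0; 0; 2; 2; 0; 3; 3; 1; 3; 1; 3];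
  [:: 2; 5; 1; 4; 3; 0; 0; 1; 4; 5; 3; 2; 0; 0; 0; 2; 2; 0; 3; 3; 1; 3; 1; 3];
  [:: 2; 5; 1; 4; 3; 0; 0; 1; 4; 2; 3; 5; 0; 0; 0; 2; 2; 0; 3; 3; 1; 3; 1; 3];
  [:: 3; 5; 1; 4; 2; 0; 0; 1; 4; 5; 2; 3; 0; 0; 0; 2; 2; 0; 3; 3; 1; 3; 1; 3];
  [:: 3; 5; 1; 4; 2; 0; 0; 1; 4; 3; 2; 5; 0; 0; 0; 2; 2; 0; 3; 3; 1; 3; 1; 3];
  [:: 3; 2; 1; 5; 4; 0; 0; 1; 4; 2; 5; 3; 0; 0; 0; 2; 2; 0; 3; 3; 1; 3; 1; 3];
  [:: 3; 2; 1; 5; 4; 0; 0; 1; 4; 3; 5; 2; 0; 0; 0; 2; 2; 0; 3; 3; 1; 3; 1; 3];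
  [:: 0; 4; 5; 1; 3; 2; 0; 1; 4; 2; 5; 3; 0; 1; 1; 3; 2; 2; 2; 1; 3; 0; 3; 0];
  [:: 0; 4; 5; 1; 3; 2; 0; 1; 4; 5; 2; 3; 0; 1; 1; 3; 2; 2; 2; 1; 3; 3; 0; 0];
  [:: 5; 4; 1; 3; 2; 0; 0; 1; 2; 4; 5; 3; 0; 0; 0; 2; 2; 0; 3; 3; 1; 3; 3; 1];
  [:: 3; 4; 1; 5; 2; 0; 0; 1; 2; 4; 3; 5; 0; 0; 0; 2; 2; 0; 3; 3; 1; 3; 3; 1];
  [:: 5; 4; 1; 3; 2; 0; 0; 1; 2; 5; 4; 3; 0; 0; 0; 2; 2; 0; 3; 3; 1; 3; 3; 1];
  [:: 3; 4; 1; 5; 2; 0; 0; 1; 2; 3; 4; 5; 0; 0; 0; 2; 2; 0; 3; 3; 1; 3; 3; 1];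
  [:: 3; 5; 1; 4; 2; 0; 0; 1; 2; 5; 3; 4; 0; 0; 0; 2; 2; 0; 3; 3; 1; 3; 3; 1];
  [:: 3; 5; 1; 4; 2; 0; 0; 1; 2; 3; 5; 4; 0; 0; 0; 2; 2; 0; 3; 3; 1; 3; 3; 1];
  [:: 2; 5; 1; 4; 3; 0; 0; 1; 4; 5; 2; 3; 0; 0; 0; 2; 2; 0; 3; 3; 1; 3; 3; 1];
  [:: 2; 5; 1; 4; 3; 0; 0; 1; 4; 2; 5; 3; 0; 0; 0; 2; 2; 0; 3; 3; 1; 3; 3; 1];
  [:: 3; 5; 1; 4; 2; 0; 0; 1; 4; 5; 3; 2; 0; 0; 0; 2; 2; 0; 3; 3; 1; 3; 3; 1];
  [:: 3; 5; 1; 4; 2; 0; 0; 1; 4; 3; 5; 2; 0; 0; 0; 2; 2; 0; 3; 3; 1; 3; 3; 1];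
  [:: 3; 2; 1; 5; 4; 0; 0; 1; 4; 2; 3; 5; 0; 0; 0; 2; 2; 0; 3; 3; 1; 3; 3; 1];
  [:: 3; 2; 1; 5; 4; 0; 0; 1; 4; 3; 2; 5; 0; 0; 0; 2; 2; 0; 3; 3; 1; 3; 3; 1];
  [:: 3; 5; 4; 1; 2; 0; 0; 1; 2; 4; 5; 3; 0; 0; 0; 0; 2; 0; 3; 3; 1; 3; 3; 3];
  [:: 3; 5; 4; 1; 2; 0; 0; 1; 2; 4; 3; 5; 0; 0; 0; 0; 2; 0; 3; 3; 1; 3; 3; 3];
  [:: 3; 5; 4; 1; 2; 0; 0; 1; 2; 5; 4; 3; 0; 0; 0; 0; 2; 0; 3; 3; 1; 3; 3; 3];
  [:: 3; 5; 4; 1; 2; 0; 0; 1; 2; 3; 4; 5; 0; 0; 0; 0; 2; 0; 3; 3; 1; 3; 3; 3];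
  [:: 3; 5; 4; 1; 2; 0; 0; 1; 2; 5; 3; 4; 0; 0; 0; 0; 2; 0; 3; 3; 1; 3; 3; 3];
  [:: 3; 5; 4; 1; 2; 0; 0; 1; 2; 3; 5; 4; 0; 0; 0; 0; 2; 0; 3; 3; 1; 3; 3; 3];
  [:: 3; 2; 5; 1; 4; 0; 0; 1; 4; 5; 2; 3; 0; 0; 0; 0; 2; 0; 3; 3; 1; 3; 3; 3];
  [:: 3; 2; 5; 1; 4; 0; 0; 1; 4; 2; 5; 3; 0; 0; 0; 0; 2; 0; 3; 3; 1; 3; 3; 3];
  [:: 3; 2; 5; 1; 4; 0; 0; 1; 4; 5; 3; 2; 0; 0; 0; 0; 2; 0; 3; 3; 1; 3; 3; 3];
  [:: 3; 2; 5; 1; 4; 0; 0; 1; 4; 2; 3; 5; 0; 0; 0; 0; 2; 0; 3; 3; 1; 3; 3; 3];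
  [:: 3; 2; 5; 1; 4; 0; 0; 1; 4; 3; 5; 2; 0; 0; 0; 0; 2; 0; 3; 3; 1; 3; 3; 3];
  [:: 3; 2; 5; 1; 4; 0; 0; 1; 4; 3; 2; 5; 0; 0; 0; 0; 2; 0; 3; 3; 1; 3; 3; 3];
  [:: 4; 1; 5; 3; 2; 0; 0; 1; 4; 2; 3; 5; 0; 0; 2; 2; 2; 0; 3; 3; 3; 0; 1; 1];
  [:: 4; 1; 5; 3; 2; 0; 0; 1; 4; 2; 5; 3; 0; 0; 2; 2; 2; 0; 3; 3; 3; 0; 1; 1];
  [:: 2; 4; 1; 5; 3; 0; 0; 1; 4; 2; 3; 5; 0; 0; 0; 2; 2; 0; 3; 3; 3; 0; 1; 1];
  [:: 2; 4; 1; 5; 3; 0; 0; 1; 4; 2; 5; 3; 0; 0; 0; 2; 2; 0; 3; 3; 3; 0; 1; 1];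
  [:: 4; 1; 5; 3; 2; 0; 0; 1; 4; 3; 2; 5; 0; 0; 2; 2; 2; 0; 3; 3; 3; 1; 0; 1];
  [:: 4; 1; 5; 3; 2; 0; 0; 1; 4; 5; 2; 3; 0; 0; 2; 2; 2; 0; 3; 3; 3; 1; 0; 1];
  [:: 2; 4; 1; 5; 3; 0; 0; 1; 4; 3; 2; 5; 0; 0; 0; 2; 2; 0; 3; 3; 3; 1; 0; 1];
  [:: 2; 4; 1; 5; 3; 0; 0; 1; 4; 5; 2; 3; 0; 0; 0; 2; 2; 0; 3; 3; 3; 1; 0; 1];
  [:: 4; 1; 5; 3; 2; 0; 0; 1; 4; 3; 5; 2; 0; 0; 2; 2; 2; 0; 3; 3; 3; 1; 1; 0];
  [:: 4; 1; 5; 3; 2; 0; 0; 1; 4; 5; 3; 2; 0; 0; 2; 2; 2; 0; 3; 3; 3; 1; 1; 0];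
  [:: 2; 4; 1; 5; 3; 0; 0; 1; 4; 3; 5; 2; 0; 0; 0; 2; 2; 0; 3; 3; 3; 1; 1; 0];
  [:: 2; 4; 1; 5; 3; 0; 0; 1; 4; 5; 3; 2; 0; 0; 0; 2; 2; 0; 3; 3; 3; 1; 1; 0];
  [:: 4; 1; 5; 3; 2; 0; 0; 1; 4; 2; 3; 5; 0; 0; 2; 2; 2; 0; 3; 3; 3; 1; 1; 1];
  [:: 4; 1; 5; 3; 2; 0; 0; 1; 4; 2; 5; 3; 0; 0; 2; 2; 2; 0; 3; 3; 3; 1; 1; 1];
  [:: 4; 1; 5; 3; 2; 0; 0; 1; 4; 3; 2; 5; 0; 0; 2; 2; 2; 0; 3; 3; 3; 1; 1; 1];
  [:: 4; 1; 5; 3; 2; 0; 0; 1; 4; 5; 2; 3; 0; 0; 2; 2; 2; 0; 3; 3; 3; 1; 1; 1];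
  [:: 4; 1; 5; 3; 2; 0; 0; 1; 4; 3; 5; 2; 0; 0; 2; 2; 2; 0; 3; 3; 3; 1; 1; 1];
  [:: 4; 1; 5; 3; 2; 0; 0; 1; 4; 5; 3; 2; 0; 0; 2; 2; 2; 0; 3; 3; 3; 1; 1; 1];
  [:: 2; 1; 5; 4; 3; 0; 0; 1; 2; 3; 4; 5; 0; 0; 2; 2; 2; 0; 3; 3; 3; 1; 1; 1];
  [:: 2; 1; 5; 4; 3; 0; 0; 1; 2; 3; 5; 4; 0; 0; 2; 2; 2; 0; 3; 3; 3; 1; 1; 1];
  [:: 2; 1; 5; 4; 3; 0; 0; 1; 2; 4; 3; 5; 0; 0; 2; 2; 2; 0; 3; 3; 3; 1; 1; 1];
  [:: 2; 1; 5; 4; 3; 0; 0; 1; 2; 4; 5; 3; 0; 0; 2; 2; 2; 0; 3; 3; 3; 1; 1; 1];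
  [:: 2; 1; 5; 4; 3; 0; 0; 1; 2; 5; 3; 4; 0; 0; 2; 2; 2; 0; 3; 3; 3; 1; 1; 1];
  [:: 2; 1; 5; 4; 3; 0; 0; 1; 2; 5; 4; 3; 0; 0; 2; 2; 2; 0; 3; 3; 3; 1; 1; 1];
  [:: 5; 4; 1; 3; 2; 0; 0; 1; 4; 2; 3; 5; 0; 0; 0; 2; 2; 0; 3; 3; 3; 1; 1; 3];
  [:: 3; 4; 1; 5; 2; 0; 0; 1; 4; 2; 5; 3; 0; 0; 0; 2; 2; 0; 3; 3; 3; 1; 1; 3];
  [:: 5; 4; 1; 3; 2; 0; 0; 1; 4; 3; 2; 5; 0; 0; 0; 2; 2; 0; 3; 3; 3; 1; 1; 3];
  [:: 3; 4; 1; 5; 2; 0; 0; 1; 4; 5; 2; 3; 0; 0; 0; 2; 2; 0; 3; 3; 3; 1; 1; 3];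
  [:: 2; 5; 1; 4; 3; 0; 0; 1; 2; 3; 4; 5; 0; 0; 0; 2; 2; 0; 3; 3; 3; 1; 1; 3];
  [:: 2; 4; 1; 5; 3; 0; 0; 1; 4; 3; 5; 2; 0; 0; 0; 2; 2; 0; 3; 3; 3; 1; 1; 3];
  [:: 2; 4; 1; 5; 3; 0; 0; 1; 2; 3; 5; 4; 0; 0; 0; 2; 2; 0; 3; 3; 3; 1; 1; 3];
  [:: 2; 5; 1; 4; 3; 0; 0; 1; 2; 4; 3; 5; 0; 0; 0; 2; 2; 0; 3; 3; 3; 1; 1; 3];
  [:: 2; 4; 1; 5; 3; 0; 0; 1; 4; 5; 3; 2; 0; 0; 0; 2; 2; 0; 3; 3; 3; 1; 1; 3];
  [:: 2; 4; 1; 5; 3; 0; 0; 1; 2; 5; 3; 4; 0; 0; 0; 2; 2; 0; 3; 3; 3; 1; 1; 3];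
  [:: 3; 2; 1; 5; 4; 0; 0; 1; 2; 4; 5; 3; 0; 0; 0; 2; 2; 0; 3; 3; 3; 1; 1; 3];
  [:: 3; 2; 1; 5; 4; 0; 0; 1; 2; 5; 4; 3; 0; 0; 0; 2; 2; 0; 3; 3; 3; 1; 1; 3];
  [:: 5; 4; 1; 3; 2; 0; 0; 1; 4; 2; 5; 3; 0; 0; 0; 2; 2; 0; 3; 3; 3; 1; 3; 1];
  [:: 3; 4; 1; 5; 2; 0; 0; 1; 4; 2; 3; 5; 0; 0; 0; 2; 2; 0; 3; 3; 3; 1; 3; 1];
  [:: 5; 4; 1; 3; 2; 0; 0; 1; 4; 3; 5; 2; 0; 0; 0; 2; 2; 0; 3; 3; 3; 1; 3; 1];
  [:: 3; 4; 1; 5; 2; 0; 0; 1; 4; 5; 3; 2; 0; 0; 0; 2; 2; 0; 3; 3; 3; 1; 3; 1];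
  [:: 2; 5; 1; 4; 3; 0; 0; 1; 2; 3; 5; 4; 0; 0; 0; 2; 2; 0; 3; 3; 3; 1; 3; 1];
  [:: 2; 4; 1; 5; 3; 0; 0; 1; 4; 3; 2; 5; 0; 0; 0; 2; 2; 0; 3; 3; 3; 1; 3; 1];
  [:: 2; 4; 1; 5; 3; 0; 0; 1; 2; 3; 4; 5; 0; 0; 0; 2; 2; 0; 3; 3; 3; 1; 3; 1];
  [:: 2; 5; 1; 4; 3; 0; 0; 1; 2; 4; 5; 3; 0; 0; 0; 2; 2; 0; 3; 3; 3; 1; 3; 1];
  [:: 2; 4; 1; 5; 3; 0; 0; 1; 4; 5; 2; 3; 0; 0; 0; 2; 2; 0; 3; 3; 3; 1; 3; 1];
  [:: 2; 4; 1; 5; 3; 0; 0; 1; 2; 5; 4; 3; 0; 0; 0; 2; 2; 0; 3; 3; 3; 1; 3; 1];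
  [:: 3; 2; 1; 5; 4; 0; 0; 1; 2; 4; 3; 5; 0; 0; 0; 2; 2; 0; 3; 3; 3; 1; 3; 1];
  [:: 3; 2; 1; 5; 4; 0; 0; 1; 2; 5; 3; 4; 0; 0; 0; 2; 2; 0; 3; 3; 3; 1; 3; 1];
  [:: 3; 5; 4; 1; 2; 0; 0; 1; 4; 2; 5; 3; 0; 0; 0; 0; 2; 0; 3; 3; 3; 1; 3; 3];
  [:: 3; 5; 4; 1; 2; 0; 0; 1; 4; 2; 3; 5; 0; 0; 0; 0; 2; 0; 3; 3; 3; 1; 3; 3];
  [:: 2; 5; 4; 1; 3; 0; 0; 1; 4; 3; 5; 2; 0; 0; 0; 0; 2; 0; 3; 3; 3; 1; 3; 3];
  [:: 2; 4; 5; 1; 3; 0; 0; 1; 2; 3; 5; 4; 0; 0; 0; 0; 2; 0; 3; 3; 3; 1; 3; 3];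
  [:: 2; 5; 4; 1; 3; 0; 0; 1; 4; 3; 2; 5; 0; 0; 0; 0; 2; 0; 3; 3; 3; 1; 3; 3];
  [:: 2; 4; 5; 1; 3; 0; 0; 1; 2; 3; 4; 5; 0; 0; 0; 0; 2; 0; 3; 3; 3; 1; 3; 3];
  [:: 2; 3; 4; 1; 5; 0; 0; 1; 4; 5; 3; 2; 0; 0; 0; 0; 2; 0; 3; 3; 3; 1; 3; 3];
  [:: 3; 2; 5; 1; 4; 0; 0; 1; 2; 4; 5; 3; 0; 0; 0; 0; 2; 0; 3; 3; 3; 1; 3; 3];
  [:: 2; 3; 4; 1; 5; 0; 0; 1; 4; 5; 2; 3; 0; 0; 0; 0; 2; 0; 3; 3; 3; 1; 3; 3];
  [:: 3; 2; 5; 1; 4; 0; 0; 1; 2; 4; 3; 5; 0; 0; 0; 0; 2; 0; 3; 3; 3; 1; 3; 3];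
  [:: 3; 2; 4; 1; 5; 0; 0; 1; 2; 5; 4; 3; 0; 0; 0; 0; 2; 0; 3; 3; 3; 1; 3; 3];
  [:: 3; 2; 4; 1; 5; 0; 0; 1; 2; 5; 3; 4; 0; 0; 0; 0; 2; 0; 3; 3; 3; 1; 3; 3];
  [:: 5; 4; 1; 3; 2; 0; 0; 1; 4; 5; 2; 3; 0; 0; 0; 2; 2; 0; 3; 3; 3; 3; 1; 1];
  [:: 3; 4; 1; 5; 2; 0; 0; 1; 4; 3; 2; 5; 0; 0; 0; 2; 2; 0; 3; 3; 3; 3; 1; 1];
  [:: 5; 4; 1; 3; 2; 0; 0; 1; 4; 5; 3; 2; 0; 0; 0; 2; 2; 0; 3; 3; 3; 3; 1; 1];
  [:: 3; 4; 1; 5; 2; 0; 0; 1; 4; 3; 5; 2; 0; 0; 0; 2; 2; 0; 3; 3; 3; 3; 1; 1];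
  [:: 2; 5; 1; 4; 3; 0; 0; 1; 2; 5; 3; 4; 0; 0; 0; 2; 2; 0; 3; 3; 3; 3; 1; 1];
  [:: 2; 5; 1; 4; 3; 0; 0; 1; 2; 5; 4; 3; 0; 0; 0; 2; 2; 0; 3; 3; 3; 3; 1; 1];
  [:: 2; 4; 1; 5; 3; 0; 0; 1; 4; 2; 3; 5; 0; 0; 0; 2; 2; 0; 3; 3; 3; 3; 1; 1];
  [:: 2; 4; 1; 5; 3; 0; 0; 1; 2; 4; 3; 5; 0; 0; 0; 2; 2; 0; 3; 3; 3; 3; 1; 1];
  [:: 2; 4; 1; 5; 3; 0; 0; 1; 4; 2; 5; 3; 0; 0; 0; 2; 2; 0; 3; 3; 3; 3; 1; 1];
  [:: 2; 4; 1; 5; 3; 0; 0; 1; 2; 4; 5; 3; 0; 0; 0; 2; 2; 0; 3; 3; 3; 3; 1; 1];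
  [:: 3; 2; 1; 5; 4; 0; 0; 1; 2; 3; 4; 5; 0; 0; 0; 2; 2; 0; 3; 3; 3; 3; 1; 1];
  [:: 3; 2; 1; 5; 4; 0; 0; 1; 2; 3; 5; 4; 0; 0; 0; 2; 2; 0; 3; 3; 3; 3; 1; 1];
  [:: 3; 5; 4; 1; 2; 0; 0; 1; 4; 5; 2; 3; 0; 0; 0; 0; 2; 0; 3; 3; 3; 3; 1; 3];
  [:: 3; 5; 4; 1; 2; 0; 0; 1; 4; 3; 2; 5; 0; 0; 0; 0; 2; 0; 3; 3; 3; 3; 1; 3];
  [:: 2; 5; 4; 1; 3; 0; 0; 1; 4; 5; 3; 2; 0; 0; 0; 0; 2; 0; 3; 3; 3; 3; 1; 3];
  [:: 2; 4; 5; 1; 3; 0; 0; 1; 2; 5; 3; 4; 0; 0; 0; 0; 2; 0; 3; 3; 3; 3; 1; 3];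
  [:: 2; 5; 4; 1; 3; 0; 0; 1; 4; 2; 3; 5; 0; 0; 0; 0; 2; 0; 3; 3; 3; 3; 1; 3];
  [:: 2; 4; 5; 1; 3; 0; 0; 1; 2; 4; 3; 5; 0; 0; 0; 0; 2; 0; 3; 3; 3; 3; 1; 3];
  [:: 2; 3; 4; 1; 5; 0; 0; 1; 4; 3; 5; 2; 0; 0; 0; 0; 2; 0; 3; 3; 3; 3; 1; 3];
  [:: 3; 2; 5; 1; 4; 0; 0; 1; 2; 5; 4; 3; 0; 0; 0; 0; 2; 0; 3; 3; 3; 3; 1; 3];
  [:: 2; 3; 4; 1; 5; 0; 0; 1; 4; 2; 5; 3; 0; 0; 0; 0; 2; 0; 3; 3; 3; 3; 1; 3];
  [:: 3; 2; 5; 1; 4; 0; 0; 1; 2; 3; 4; 5; 0; 0; 0; 0; 2; 0; 3; 3; 3; 3; 1; 3];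
  [:: 3; 2; 4; 1; 5; 0; 0; 1; 2; 4; 5; 3; 0; 0; 0; 0; 2; 0; 3; 3; 3; 3; 1; 3];
  [:: 3; 2; 4; 1; 5; 0; 0; 1; 2; 3; 5; 4; 0; 0; 0; 0; 2; 0; 3; 3; 3; 3; 1; 3];
  [:: 3; 5; 4; 1; 2; 0; 0; 1; 4; 5; 3; 2; 0; 0; 0; 0; 2; 0; 3; 3; 3; 3; 3; 1];
  [:: 3; 5; 4; 1; 2; 0; 0; 1; 4; 3; 5; 2; 0; 0; 0; 0; 2; 0; 3; 3; 3; 3; 3; 1];
  [:: 2; 5; 4; 1; 3; 0; 0; 1; 4; 5; 2; 3; 0; 0; 0; 0; 2; 0; 3; 3; 3; 3; 3; 1];
  [:: 2; 4; 5; 1; 3; 0; 0; 1; 2; 5; 4; 3; 0; 0; 0; 0; 2; 0; 3; 3; 3; 3; 3; 1];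
  [:: 2; 5; 4; 1; 3; 0; 0; 1; 4; 2; 5; 3; 0; 0; 0; 0; 2; 0; 3; 3; 3; 3; 3; 1];
  [:: 2; 4; 5; 1; 3; 0; 0; 1; 2; 4; 5; 3; 0; 0; 0; 0; 2; 0; 3; 3; 3; 3; 3; 1];
  [:: 2; 3; 4; 1; 5; 0; 0; 1; 4; 3; 2; 5; 0; 0; 0; 0; 2; 0; 3; 3; 3; 3; 3; 1];
  [:: 3; 2; 5; 1; 4; 0; 0; 1; 2; 5; 3; 4; 0; 0; 0; 0; 2; 0; 3; 3; 3; 3; 3; 1];
  [:: 2; 3; 4; 1; 5; 0; 0; 1; 4; 2; 3; 5; 0; 0; 0; 0; 2; 0; 3; 3; 3; 3; 3; 1];
  [:: 3; 2; 5; 1; 4; 0; 0; 1; 2; 3; 5; 4; 0; 0; 0; 0; 2; 0; 3; 3; 3; 3; 3; 1];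
  [:: 3; 2; 4; 1; 5; 0; 0; 1; 2; 4; 3; 5; 0; 0; 0; 0; 2; 0; 3; 3; 3; 3; 3; 1];
  [:: 3; 2; 4; 1; 5; 0; 0; 1; 2; 3; 4; 5; 0; 0; 0; 0; 2; 0; 3; 3; 3; 3; 3; 1];
  [:: 2; 3; 5; 4; 1; 0; 0; 1; 4; 5; 3; 2; 0; 0; 0; 0; 0; 0; 3; 3; 3; 3; 3; 3];
  [:: 2; 3; 5; 4; 1; 0; 0; 1; 4; 5; 2; 3; 0; 0; 0; 0; 0; 0; 3; 3; 3; 3; 3; 3];
  [:: 2; 3; 5; 4; 1; 0; 0; 1; 4; 3; 5; 2; 0; 0; 0; 0; 0; 0; 3; 3; 3; 3; 3; 3];
  [:: 2; 3; 5; 4; 1; 0; 0; 1; 4; 2; 5; 3; 0; 0; 0; 0; 0; 0; 3; 3; 3; 3; 3; 3];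
  [:: 2; 3; 5; 4; 1; 0; 0; 1; 4; 3; 2; 5; 0; 0; 0; 0; 0; 0; 3; 3; 3; 3; 3; 3];
  [:: 2; 3; 5; 4; 1; 0; 0; 1; 4; 2; 3; 5; 0; 0; 0; 0; 0; 0; 3; 3; 3; 3; 3; 3];
  [:: 3; 2; 4; 5; 1; 0; 0; 1; 2; 5; 4; 3; 0; 0; 0; 0; 0; 0; 3; 3; 3; 3; 3; 3];
  [:: 3; 2; 4; 5; 1; 0; 0; 1; 2; 4; 5; 3; 0; 0; 0; 0; 0; 0; 3; 3; 3; 3; 3; 3];
  [:: 3; 2; 4; 5; 1; 0; 0; 1; 2; 5; 3; 4; 0; 0; 0; 0; 0; 0; 3; 3; 3; 3; 3; 3];
  [:: 3; 2; 4; 5; 1; 0; 0; 1; 2; 4; 3; 5; 0; 0; 0; 0; 0; 0; 3; 3; 3; 3; 3; 3];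
  [:: 3; 2; 4; 5; 1; 0; 0; 1; 2; 3; 5; 4; 0; 0; 0; 0; 0; 0; 3; 3; 3; 3; 3; 3];
  [:: 3; 2; 4; 5; 1; 0; 0; 1; 2; 3; 4; 5; 0; 0; 0; 0; 0; 0; 3; 3; 3; 3; 3; 3];
  [:: 2; 3; 5; 4; 1; 0; 0; 1; 4; 5; 3; 2; 0; 0; 0; 0; 0; 1; 3; 3; 3; 3; 3; 3];
  [:: 2; 3; 5; 4; 1; 0; 0; 1; 4; 5; 2; 3; 0; 0; 0; 0; 0; 1; 3; 3; 3; 3; 3; 3];
  [:: 2; 3; 5; 4; 1; 0; 0; 1; 4; 3; 5; 2; 0; 0; 0; 0; 0; 1; 3; 3; 3; 3; 3; 3];
  [:: 2; 3; 5; 4; 1; 0; 0; 1; 4; 2; 5; 3; 0; 0; 0; 0; 0; 1; 3; 3; 3; 3; 3; 3];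
  [:: 2; 3; 5; 4; 1; 0; 0; 1; 4; 3; 2; 5; 0; 0; 0; 0; 0; 1; 3; 3; 3; 3; 3; 3];
  [:: 2; 3; 5; 4; 1; 0; 0; 1; 4; 2; 3; 5; 0; 0; 0; 0; 0; 1; 3; 3; 3; 3; 3; 3];
  [:: 3; 2; 4; 5; 1; 0; 0; 1; 2; 5; 4; 3; 0; 0; 0; 0; 0; 1; 3; 3; 3; 3; 3; 3];
  [:: 3; 2; 4; 5; 1; 0; 0; 1; 2; 4; 5; 3; 0; 0; 0; 0; 0; 1; 3; 3; 3; 3; 3; 3];
  [:: 3; 2; 4; 5; 1; 0; 0; 1; 2; 5; 3; 4; 0; 0; 0; 0; 0; 1; 3; 3; 3; 3; 3; 3];
  [:: 3; 2; 4; 5; 1; 0; 0; 1; 2; 4; 3; 5; 0; 0; 0; 0; 0; 1; 3; 3; 3; 3; 3; 3];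
  [:: 3; 2; 4; 5; 1; 0; 0; 1; 2; 3; 5; 4; 0; 0; 0; 0; 0; 1; 3; 3; 3; 3; 3; 3];
  [:: 3; 2; 4; 5; 1; 0; 0; 1; 2; 3; 4; 5; 0; 0; 0; 0; 0; 1; 3; 3; 3; 3; 3; 3];
  [:: 0; 2; 3; 5; 4; 1; 0; 1; 4; 5; 3; 2; 0; 3; 3; 3; 3; 3; 2; 0; 0; 0; 0; 0];
  [:: 0; 2; 3; 5; 4; 1; 0; 1; 4; 5; 2; 3; 0; 3; 3; 3; 3; 3; 2; 0; 0; 0; 0; 0];
  [:: 0; 2; 3; 5; 4; 1; 0; 1; 4; 3; 5; 2; 0; 3; 3; 3; 3; 3; 2; 0; 0; 0; 0; 0];
  [:: 0; 2; 3; 5; 4; 1; 0; 1; 4; 2; 5; 3; 0; 3; 3; 3; 3; 3; 2; 0; 0; 0; 0; 0];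
  [:: 0; 2; 3; 5; 4; 1; 0; 1; 4; 3; 2; 5; 0; 3; 3; 3; 3; 3; 2; 0; 0; 0; 0; 0];
  [:: 0; 2; 3; 5; 4; 1; 0; 1; 4; 2; 3; 5; 0; 3; 3; 3; 3; 3; 2; 0; 0; 0; 0; 0];
  [:: 0; 3; 2; 4; 5; 1; 0; 1; 2; 5; 4; 3; 0; 3; 3; 3; 3; 3; 2; 0; 0; 0; 0; 0];
  [:: 0; 3; 2; 4; 5; 1; 0; 1; 2; 4; 5; 3; 0; 3; 3; 3; 3; 3; 2; 0; 0; 0; 0; 0];
  [:: 0; 3; 2; 4; 5; 1; 0; 1; 2; 5; 3; 4; 0; 3; 3; 3; 3; 3; 2; 0; 0; 0; 0; 0];
  [:: 0; 3; 2; 4; 5; 1; 0; 1; 2; 4; 3; 5; 0; 3; 3; 3; 3; 3; 2; 0; 0; 0; 0; 0];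
  [:: 0; 3; 2; 4; 5; 1; 0; 1; 2; 3; 5; 4; 0; 3; 3; 3; 3; 3; 2; 0; 0; 0; 0; 0];
  [:: 0; 3; 2; 4; 5; 1; 0; 1; 2; 3; 4; 5; 0; 3; 3; 3; 3; 3; 2; 0; 0; 0; 0; 0]].

Local Open Scope ring_scope.

Definition fA (x y : nat) : int :=
  match ncode x, ncode y with
  | 0%N, 0%N => 1 | 0%N, _ => 0 | _, 0%N => 0
  | 1%N, 1%N => 1 | 2%N, 2%N => 1 | _, _ => -1 end.
Definition fB (x y : nat) : int :=
  match ncode x, ncode y with 1%N, 0%N => 1 | 2%N, 0%N => -1 | _, _ => 0 end.
Definition fC (x y : nat) : int :=
  match ncode x, ncode y with 0%N, 1%N => 1 | 0%N, 2%N => -1 | _, _ => 0 end.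
Definition cA r s := sum2 fA r s.
Definition cB r s := sum2 fB r s.
Definition cC r s := sum2 fC r s.
Definition m2 (r s : seq nat) : bool :=
  let A := cA r s in let B := cB r s in
  (B == cC r s) && (if B == 0 then A == 0 else A * A < 4 * (B * B)).
Definition fR (x y : bool) : int := if x == y then 1 else -1.
Definition mR (r s : seq bool) : bool := sum2 fR r s == 0.

Definition rowc (X : Type) (g : 'I_6 -> X) : seq X := map g (enum 'I_6).
Definition allrows : seq (seq nat) := rowsg [:: 0%N; 1%N; 2%N] 6.
Definition allb : seq (seq bool) := rowsg [:: false; true] 6.
Definition sols2 := srch m2 6 [::] allrows.
Definition hasAB0 (L : seq (seq nat)) :=
  has (fun r => has (fun s => (r != s) && (cA r s == 0) && (cB r s != 0)) L) L.
Definition wit_ok (L : seq (seq nat)) (w : seq nat) : bool :=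
  [&& perm_eq (take 6 w) (iota 0 6), perm_eq (take 6 (drop 6 w)) (iota 0 6) &
   all (fun t => all (fun l => ce (nth 0 (nth [::] L t) l) %% 4 ==
      (nth 0 w (12 + t) + nth 0 w (18 + l) + h1e (nth 0 w t) (nth 0 w (6 + l))) %% 4)
      (iota 0 6)) (iota 0 6)]%N.
Definition chk L w := hasAB0 L && wit_ok L w.

Lemma F1 : all2 chk sols2 wits. Proof. by vm_compute. Qed.
Lemma F2 : all (fun x => ~~ m2 x x) allrows. Proof. by vm_compute. Qed.
Lemma F3 : uniq allrows. Proof. by vm_compute. Qed.
Lemma F4 : srch mR 3%N [::] allb = [::]. Proof. by vm_compute. Qed.
Lemma F5 : all (fun x => ~~ mR x x) allb. Proof. by vm_compute. Qed.
Lemma F6 : uniq allb. Proof. by vm_compute. Qed.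

Lemma clique_in (X : eqType) (m : rel X) (allX : seq X) (idx : seq 'I_6) (r : 'I_6 -> X) :
  uniq allX -> uniq idx -> (forall j, r j \in allX) -> all (fun x => ~~ m x x) allX ->
  (forall j k, j != k -> m (r j) (r k)) ->
  exists L, [/\ L \in srch m (size idx) [::] allX, size L = size idx & L =i map r idx].
Proof.
move=> uA uI rin nm H.
have rinj : injective r.
  move=> j k E; apply/eqP; apply/negPn/negP => jk.
  by have := H j k jk; rewrite E; have := allP nm _ (rin k) => /negbTE ->.
have url : uniq (map r idx) by rewrite map_inj_uniq.
have sb : {subset map r idx <= allX} by move=> x /mapP[j _ ->].
have rel : {in map r idx &, forall x y, x != y -> m x y}.
  move=> x y /mapP[j _ ->] /mapP[k _ ->] ne; apply: H.
  by apply: contraNneq ne => ->.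
have [Ssb Ssz Spw SE] := pick_sub uA url sb rel.
exists (rev (filter (mem (map r idx)) allX)); split.
- have := @srch_complete X m _ [::] _ _ Ssb (erefl _) Spw.
  by rewrite cats0 Ssz size_map.
- by rewrite size_rev Ssz size_map.
- by move=> x; rewrite mem_rev SE.
Qed.

Section Gen.
Variable C : numClosedFieldType.

Definition v (a : C) (c : nat) : C := if c is 0%N then 1 else if c is 1%N then a else - a.

Lemma H1E (i j : 'I_6) : (H1 : 'M[C]_6) i j = 'i ^+ h1e i j.
Proof.
rewrite mxE; case: i => [[|[|[|[|[|[|i]]]]]] Hi] //;
  case: j => [[|[|[|[|[|[|j]]]]]] Hj] //=; by rewrite ?expr0 ?expr1 ?sqrCi.
Qed.

Lemma iX_mod4 k : ('i : C) ^+ k = 'i ^+ (k %% 4).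
Proof.
rewrite {1}(divn_eq k 4) exprD mulnC exprM.
have -> : ('i : C) ^+ 4 = 1 by rewrite (_ : 4 = 2 * 2)%N // exprM sqrCi sqrrN expr1n.
by rewrite expr1n mul1r.
Qed.

Lemma vi_ce c : v 'i c = 'i ^+ ce c.
Proof.
case: c => [|[|c]] /=; rewrite ?expr0 ?expr1 //.
by rewrite exprS sqrCi mulrN1.
Qed.

Lemma orth (H : 'M[C]_6) j k : is_CHM H -> j != k ->
  \sum_l H j l * (H k l)^* = 0.
Proof.
move=> [_ HH] jk; have := congr1 (fun M : 'M[C]_6 => M j k) HH; rewrite !mxE => E.
rewrite (negbTE jk) mulr0n in E; rewrite -[RHS]E; apply: eq_bigr => l _.
by rewrite /ctrmx !mxE.
Qed.

Lemma termE (a : C) x y : a * a^* = 1 ->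
  v a x * (v a y)^* = (fA x y)%:~R + (fB x y)%:~R * a + (fC x y)%:~R * a^*.
Proof.
move=> aa.
case: x => [|[|x]]; case: y => [|[|y]];
  rewrite /= ?rmorph1 ?rmorphN ?mul1r ?mulr1 ?mulrN ?mulNr ?opprK ?aa;
  rewrite /fA /fB /fC /=; rewrite ?mul0r ?mul1r ?mulN1r ?addr0 ?add0r //.
Qed.


Lemma pair_nonreal (a : C) (A B D : int) : a * a^* = 1 -> a^* != a ->
  A%:~R + B%:~R * a + D%:~R * a^* = 0 :> C ->
  [/\ B = D, A%:~R + B%:~R * (a + a^*) = 0 :> C &
   (B == D) && (if B == 0 then A == 0 else A * A < 4 * (B * B))].
Proof.
move=> aa na E.
have cj : A%:~R + B%:~R * a^* + D%:~R * a = 0 :> C.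
  have := congr1 (fun z : C => z^*) E.
  rewrite /= rmorph0 !rmorphD !rmorphM !rmorph_int.
  change (A%:~R + B%:~R * a^* + D%:~R * a^*^* = 0 -> A%:~R + B%:~R * a^* + D%:~R * a = 0).
  by rewrite conjCK.
have dnz : a - a^* != 0 by rewrite subr_eq0 eq_sym.
have BD : B = D.
  have : (B%:~R - D%:~R) * (a - a^*) = 0 :> C.
    rewrite (_ : _ * _ = (A%:~R + B%:~R * a + D%:~R * a^*)
                        - (A%:~R + B%:~R * a^* + D%:~R * a)); last by ring.
    by rewrite E cj subrr.
  move/eqP; rewrite mulf_eq0 (negbTE dnz) orbF subr_eq0 => /eqP; exact: intr_inj.
subst D.
have E2 : A%:~R + B%:~R * (a + a^*) = 0 :> C by rewrite -[RHS]E; ring.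
split => //; rewrite eqxx /=.
have E3 : A%:~R = - (B%:~R * (a + a^*)) :> C by apply/eqP; rewrite -addr_eq0 E2.
have [B0|Bnz] := eqVneq B 0.
  by move: E3; rewrite B0 mul0r oppr0 => /eqP; rewrite intr_eq0.
rewrite -(ltr_int C) intrM E3.
have key : (- (B%:~R * (a + a^*))) * (- (B%:~R * (a + a^*))) =
   (4 * (B * B))%:~R - (B * B)%:~R * `|a - a^*| ^+ 2 :> C.
  rewrite normCK rmorphB /= conjCK !intrM.
  have -> : (4%:~R : C) * (B%:~R * B%:~R) = 4%:~R * (B%:~R * B%:~R) * (a * a^*)
    by rewrite aa mulr1.
  rewrite (_ : (4%:~R : C) = 4) //; ring.
rewrite key gtrBl; apply: mulr_gt0.
  by rewrite ltr0z -expr2 exprn_even_gt0 //= Bnz.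
by apply: exprn_gt0; rewrite normr_gt0.
Qed.

Lemma sum2E (X : eqType) (f : X -> X -> int) (u w : 'I_6 -> X) :
  ((sum2 f (rowc u) (rowc w))%:~R : C) = \sum_l (f (u l) (w l))%:~R.
Proof.
rewrite /rowc -[RHS]big_enum /=.
elim: (enum 'I_6) => [|x s IH] /=; first by rewrite big_nil.
by rewrite big_cons intrD IH.
Qed.

Lemma rowsum (a : C) (H : 'M[C]_6) (p : 'I_6 -> 'I_6 -> nat) j k :
  a * a^* = 1 -> (forall j l, H j l = v a (p j l)) ->
  \sum_l H j l * (H k l)^* =
   (cA (rowc (p j)) (rowc (p k)))%:~R + (cB (rowc (p j)) (rowc (p k)))%:~R * a
   + (cC (rowc (p j)) (rowc (p k)))%:~R * a^*.
Proof.
move=> aa Hp; rewrite /cA /cB /cC !sum2E !mulr_suml -!big_split /=.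
by apply: eq_bigr => l _; rewrite !Hp termE.
Qed.

Lemma mono_unitary n (s : {perm 'I_n}) (c : 'I_n -> C) : (forall i, `|c i| = 1) ->
  monomial_unitary (\matrix_(i, j) (if j == s i then c i else 0) : 'M[C]_n).
Proof.
move=> Hc.
have cnz i : c i != 0 by rewrite -normr_eq0 Hc oner_eq0.
split; [|split; [|split]].
- apply/matrixP=> i i'; rewrite !mxE.
  rewrite (bigD1 (s i)) //= big1; last first.
    by move=> k /negbTE kn; rewrite !mxE kn mul0r.
  rewrite !mxE eqxx addr0.
  have [<-|ne] := eqVneq i i'.
    by rewrite eqxx -normCK Hc expr1n.
  by rewrite (inj_eq perm_inj) (negbTE ne) rmorph0 mulr0.
- move=> i; rewrite -(cards1 (s i)); apply: eq_card.
  by move=> j; rewrite !inE mxE; case: ifP => _; rewrite ?cnz ?eqxx.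
- move=> j; rewrite -(cards1 ((s^-1)%g j)); apply: eq_card.
  move=> i; rewrite !inE mxE.
  have -> : (j == s i) = (i == (s^-1)%g j).
    by rewrite [RHS]eq_sym (canF_eq (permKV s)).
  by case: ifP => _; rewrite ?cnz ?eqxx.
- by move=> i j; rewrite mxE; case: (j == s i) => //; rewrite eqxx.
Qed.

Lemma normiX k : `|('i : C) ^+ k| = 1.
Proof. by rewrite normrX normCi expr1n. Qed.

Lemma equiv_of (H : 'M[C]_6) (sg tg : {perm 'I_6}) (dd ee : 'I_6 -> nat) :
  (forall j l, H j l = 'i ^+ dd j * 'i ^+ ee l * H1 (sg j) (tg l)) ->
  complex_equivalent H H1.
Proof.
move=> HE.
pose P : 'M[C]_6 := \matrix_(i, j) if j == sg i then 'i ^+ dd i else 0.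
pose Q : 'M[C]_6 := \matrix_(i, j) if j == (tg^-1)%g i then 'i ^+ ee ((tg^-1)%g i) else 0.
exists P, Q; split; first exact: mono_unitary (fun i => normiX _).
split; first exact: (@mono_unitary 6 (tg^-1)%g (fun i => 'i ^+ ee ((tg^-1)%g i)) (fun i => normiX _)).
apply/matrixP=> j l; rewrite HE !mxE.
rewrite (bigD1 (tg l)) //= big1; last first.
  move=> k kn; rewrite !mxE.
  have -> : (l == (tg^-1)%g k) = false.
    apply/negbTE; apply: contra kn => /eqP ->; by rewrite permKV.
  by rewrite mulr0.
rewrite addr0 !mxE permK eqxx.
rewrite (bigD1 (sg j)) //= big1; last first.
  by move=> k /negbTE kn; rewrite !mxE kn mul0r.
rewrite !mxE eqxx addr0; rewrite -!mulrA; congr (_ * _); by rewrite mulrC.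
Qed.
End Gen.

Section Main.
Variable C : numClosedFieldType.

Lemma sign_term (x y : bool) : ((-1) ^+ x : C) * ((-1) ^+ y)^* = (fR x y)%:~R.
Proof.
by case: x; case: y; rewrite /fR /= ?expr0 ?expr1 ?rmorphN ?rmorph1 ?mulrNN ?mulr1 ?mul1r ?mulN1r ?mulrN1 ?intrN.
Qed.

Lemma rowc_in (g : 'I_6 -> nat) : (forall l, g l \in [:: 0%N; 1%N; 2%N]) -> rowc g \in allrows.
Proof.
move=> Hg; apply: mem_rowsg; first by rewrite size_map size_enum_ord.
by apply/allP=> x /mapP[l _ ->]; exact: Hg.
Qed.

Lemma rowb_in (g : 'I_6 -> bool) : rowc g \in allb.
Proof.
apply: mem_rowsg; first by rewrite size_map size_enum_ord.
by apply/allP=> x _; case: x.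
Qed.

Lemma nth_rowc (g : 'I_6 -> nat) (l : 'I_6) : nth 0%N (rowc g) l = g l.
Proof. by rewrite /rowc (nth_map ord0) ?size_enum_ord // nth_ord_enum. Qed.

Lemma wit_equiv (H : 'M[C]_6) (q : 'I_6 -> 'I_6 -> nat) (L : seq (seq nat)) w :
  (forall j l, H j l = v 'i (q j l)) -> L =i map (fun j => rowc (q j)) (enum 'I_6) ->
  injective (fun j => rowc (q j)) -> size L = 6%N -> wit_ok L w ->
  complex_equivalent H H1.
Proof.
move=> Hq LE rinj Lsz /and3P[pw1 pw2 /allP Hall].
have rL j : rowc (q j) \in L by rewrite LE; apply: (map_f (fun j => rowc (q j))); rewrite mem_enum.
have s1 := perm_size pw1; have s2 := perm_size pw2.
rewrite size_iota in s1 s2.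
have u1 : uniq (take 6 w) by rewrite (perm_uniq pw1) iota_uniq.
have u2 : uniq (take 6 (drop 6 w)) by rewrite (perm_uniq pw2) iota_uniq.
have lt1 t : (t < 6)%N -> (nth 0 w t < 6)%N.
  move=> ht; rewrite -(nth_take 0 ht).
  have : nth 0 (take 6 w) t \in iota 0 6 by rewrite -(perm_mem pw1) mem_nth // s1.
  by rewrite mem_iota.
have lt2 t : (t < 6)%N -> (nth 0 w (6 + t) < 6)%N.
  move=> ht; rewrite -nth_drop -(nth_take 0 ht).
  have : nth 0 (take 6 (drop 6 w)) t \in iota 0 6 by rewrite -(perm_mem pw2) mem_nth // s2.
  by rewrite mem_iota.
pose ix (j : 'I_6) : 'I_6 := inord (index (rowc (q j)) L).
have ixv j : (ix j : nat) = index (rowc (q j)) L by rewrite /ix inordK // -Lsz index_mem.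
have ixinj : injective ix.
  move=> j k E; apply: rinj; rewrite -(nth_index [::] (rL j)) -(nth_index [::] (rL k)).
  by rewrite -!ixv E.
pose sgf (j : 'I_6) : 'I_6 := inord (nth 0 w (ix j)).
have sgv j : (sgf j : nat) = nth 0 w (ix j) by rewrite /sgf inordK // lt1.
have sginj : injective sgf.
  move=> j k E; apply: ixinj; apply: val_inj.
  have : nth 0 (take 6 w) (ix j) == nth 0 (take 6 w) (ix k).
    by rewrite !nth_take // -!sgv E.
  by rewrite nth_uniq ?s1 // => /eqP.
pose tgf (l : 'I_6) : 'I_6 := inord (nth 0 w (6 + l)).
have tgv l : (tgf l : nat) = nth 0 w (6 + l) by rewrite /tgf inordK // lt2.
have tginj : injective tgf.
  move=> j k E; apply: val_inj.
  have : nth 0 (take 6 (drop 6 w)) j == nth 0 (take 6 (drop 6 w)) k.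
    by rewrite !nth_take // !nth_drop -!tgv E.
  by rewrite nth_uniq ?s2 // => /eqP.
apply: (@equiv_of C H (perm sginj) (perm tginj) (fun j => nth 0%N w (12 + ix j)%N)
                                                 (fun l => nth 0%N w (18 + l)%N)).
move=> j l; rewrite !permE H1E Hq vi_ce iX_mod4.
have Ht : ((ix j : nat) \in iota 0 6) by rewrite mem_iota /= ltn_ord.
have Hl : ((l : nat) \in iota 0 6) by rewrite mem_iota /= ltn_ord.
have := allP (Hall _ Ht) _ Hl.
rewrite ixv nth_index // nth_rowc => /eqP ->.
by rewrite -iX_mod4 sgv tgv ixv -!exprD.
Qed.

Lemma part2 (H : 'M[C]_6) (q : 'I_6 -> 'I_6 -> nat) : is_CHM H ->
  (forall j l, H j l = v 'i (q j l)) -> (forall j l, q j l \in [:: 0%N; 1%N; 2%N]) ->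
  complex_equivalent H H1.
Proof.
move=> HC Hq qin.
have ii : ('i : C) * 'i^* = 1 by rewrite conjCi mulrN -expr2 sqrCi opprK.
have ni : ('i : C)^* != 'i.
  rewrite conjCi; apply/negP => /eqP E.
  have : ('i : C) *+ 2 == 0 by rewrite mulr2n -{1}E addNr.
  by rewrite mulrn_eq0 /= (negbTE (neq0Ci C)).
have m2q j k : j != k -> m2 (rowc (q j)) (rowc (q k)).
  move=> jk; have := orth HC jk; rewrite (rowsum j k ii Hq) => E.
  by case: (pair_nonreal ii ni E).
have [L [Lin Lsz LE]] := @clique_in _ m2 allrows (enum 'I_6) (fun j => rowc (q j)) F3 (enum_uniq _) (fun j => rowc_in (qin j)) F2 m2q.
rewrite size_enum_ord in Lin Lsz.
have [w /andP[_ wok]] := all2_ex F1 Lin.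
have rinj : injective (fun j => rowc (q j)).
  move=> j k E; apply/eqP; apply/negPn/negP => jk.
  by have := m2q j k jk; rewrite E; have := allP F2 _ (rowc_in (qin k)) => /negbTE ->.
exact: (wit_equiv Hq LE rinj Lsz wok).
Qed.

Theorem gen_main (a : C) (H : 'M[C]_6) : `|a| = 1 -> is_CHM H ->
  (forall i j, H i j \in [:: 1; a; - a]) -> complex_equivalent H H1.
Proof.
move=> na HC Hin.
have aa : a * a^* = 1 by rewrite -normCK na expr1n.
pose p j l := if H j l == 1 then 0%N else if H j l == a then 1%N else 2%N.
have pin j l : p j l \in [:: 0%N; 1%N; 2%N].
  by rewrite /p; case: ifP => _; last case: ifP => _.
have Hp j l : H j l = v a (p j l).
  rewrite /p; have := Hin j l; rewrite !inE.
  case: eqP => [->|_] //=; case: eqP => [->|_] //= /eqP -> //.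
have [ar|anr] := eqVneq a^* a.
- exfalso.
  have a2 : a * a = 1 by rewrite -{2}ar aa.
  have apm : a = 1 \/ a = -1.
    have : (a - 1) * (a + 1) = 0.
      by rewrite (_ : _ * _ = a * a - 1); [rewrite a2 subrr | ring].
    by move/eqP; rewrite mulf_eq0 subr_eq0 addr_eq0 => /orP[] /eqP; [left|right].
  pose b j l := H j l != 1.
  have Hb j l : H j l = (-1) ^+ b j l.
    rewrite /b; case: (boolP (H j l == 1)) => [/eqP->|ne] /=; first by rewrite expr0.
    rewrite expr1; have := Hin j l; rewrite !inE (negbTE ne) /= => /orP[] /eqP E;
      rewrite E in ne *; case: apm => A; rewrite A ?opprK ?eqxx // in ne *.
  have Eb j k : j != k -> mR (rowc (b j)) (rowc (b k)).
    move=> jk; have := orth HC jk.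
    have -> : \sum_l H j l * (H k l)^* = (sum2 fR (rowc (b j)) (rowc (b k)))%:~R.
      by rewrite sum2E; apply: eq_bigr => l _; rewrite !Hb sign_term.
    by move/eqP; rewrite intr_eq0.
  have uI : uniq (take 3 (enum 'I_6)) by apply: take_uniq; exact: enum_uniq.
  have [L [Lin _ _]] := @clique_in _ mR allb _ (fun j => rowc (b j)) F6 uI (fun j => rowb_in (b j)) F5 Eb.
  have E3 : size (take 3 (enum 'I_6)) = 3%N by rewrite size_take size_enum_ord.
  by move: Lin; rewrite E3 F4.
- have m2p j k : j != k -> m2 (rowc (p j)) (rowc (p k)).
    move=> jk; have := orth HC jk; rewrite (rowsum j k aa Hp) => E.
    by case: (pair_nonreal aa anr E).
  have [L [Lin Lsz LE]] := @clique_in _ m2 allrows (enum 'I_6) (fun j => rowc (p j)) F3 (enum_uniq _) (fun j => rowc_in (pin j)) F2 m2p.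
  rewrite size_enum_ord in Lin Lsz.
  have [w /andP[hab _]] := all2_ex F1 Lin.
  have a2 : a + a^* = 0.
    case/hasP: hab => r rL /hasP[s sL /andP[/andP[rs A0] B0]].
    move: rL sL rs A0 B0; rewrite !LE => /mapP[j _ ->] /mapP[k _ ->] rs A0 B0.
    have jk : j != k by apply: contraNneq rs => ->.
    have := orth HC jk; rewrite (rowsum j k aa Hp) => E.
    case: (pair_nonreal aa anr E) => _ E2 _.
    move: E2; rewrite (eqP A0) add0r => /eqP; rewrite mulf_eq0 intr_eq0 (negbTE B0) /=.
    by move/eqP.
  have ac : a^* = - a by apply/eqP; rewrite -addr_eq0 addrC a2.
  have a2' : a * a = - 1 by rewrite -aa ac mulrN opprK.
  have ai : a = 'i \/ a = - 'i.
    have : (a - 'i) * (a + 'i) = 0.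
      by rewrite (_ : _ * _ = a * a - 'i ^+ 2); [rewrite a2' sqrCi subrr | ring].
    by move/eqP; rewrite mulf_eq0 subr_eq0 addr_eq0 => /orP[] /eqP; [left|right].
  pose sw (c : nat) : nat := if c is 1%N then 2%N else if c is 2%N then 1%N else c.
  case: ai => A.
    by apply: (part2 HC (q := p)) => // j l; rewrite Hp A.
  apply: (part2 HC (q := fun j l => sw (p j l))).
    move=> j l; have := pin j l; rewrite Hp A /sw !inE.
    by case: (p j l) => [|[|[|n]]] //= _; rewrite opprK.
  by move=> j l; have := pin j l; rewrite /sw !inE; case: (p j l) => [|[|[|n]]].
Qed.
End Main.

Theorem mainTheorem6 (R : realType) (a : R[i]) (H : 'M[R[i]]_6) :
  `|a| = 1 ->
  is_CHM H ->
  (forall i j, H i j \in [:: 1; a; - a]) ->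
  complex_equivalent H H1.
Proof. exact: gen_main. Qed.
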